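(* Let $\mathscr{A}=\{A_1,\ldots,A_r\}$ be an irreducible set of real $d\times d$ matrices, let $\|\cdot\|$ be any norm on $\mathbb{R}^d$, and let $\chi_p(\mathscr{A})$ denote the $p$-measure of irreducibility with respect to this norm. Then for every integer $n\ge 1$ and every integer $p\ge d-1$, \[ \rho(\mathscr{A})\le \|\mathscr{A}^n\|^{1/n}\le \big(\eta_p(\mathscr{A})\big)^{1/n}\rho(\mathscr{A}),\qquad\text{where }\ \eta_p(\mathscr{A})=\frac{\max\{1,\rho(\mathscr{A})^p\}}{\chi_p(\mathscr{A})}, \] and consequently \[ \big(\nu_p(\mathscr{A})\big)^{-1/n}\|\mathscr{A}^n\|^{1/n}\le \rho(\mathscr{A})\le \|\mathscr{A}^n\|^{1/n},\qquad\text{where }\ \nu_p(\mathscr{A})=\frac{\max\{1,\|\mathscr{A}\|^p\}}{\chi_p(\mathscr{A})}. \]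
   Context: A finite set $\mathscr{A}$ of real $d\times d$ matrices is irreducible if the matrices in $\mathscr{A}$ have no common invariant subspace other than $\{0\}$ and $\mathbb{R}^d$. For $n\ge1$, $\mathscr{A}^n$ is the set of all products $A_{i_n}\cdots A_{i_1}$ with $A_{i_j}\in\mathscr{A}$, and $\mathscr{A}^0=\{I\}$. For a norm $\|\cdot\|$ on $\mathbb{R}^d$, matrices carry the induced operator norm and $\|\mathscr{A}^n\|=\max_{A\in\mathscr{A}^n}\|A\|$ (in particular $\|\mathscr{A}\|=\max_i\|A_i\|$). The joint spectral radius is $\rho(\mathscr{A})=\limsup_{n\to\infty}\|\mathscr{A}^n\|^{1/n}$ (independent of the norm). For $p\ge1$, $\mathscr{A}_p=\bigcup_{k=0}^p\mathscr{A}^k$, and $\mathscr{A}_p(x)=\{Ax: A\in\mathscr{A}_p\}$. $\mathbf{S}(t)$ is the closed ball of radius $t$ centered at $0$ in the norm $\|\cdot\|$. The $p$-measure of irreducibility of $\mathscr{A}$ with respect to $\|\cdot\|$ is \[ \chi_p(\mathscr{A})=\inf_{x\in\mathbb{R}^d,\ \|x\|=1}\ \sup\{t\ge 0:\ \mathbf{S}(t)\subseteq \mathrm{conv}(\mathscr{A}_p(x)\cup\mathscr{A}_p(-x))\}. \] (For $p\ge d-1$, $\chi_p(\mathscr{A})>0$ if and only if $\mathscr{A}$ is irreducible.) *)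

(* Defs.v *)
From Stdlib Require Import Reals ClassicalEpsilon.
From mathcomp Require Import ssreflect ssrfun ssrbool eqtype ssrnat seq fintype bigop.

Set Implicit Arguments.
Unset Strict Implicit.

Local Open Scope R_scope.

Definition vec (d : nat) := 'I_d -> R.
Definition mat (d : nat) := 'I_d -> 'I_d -> R.

Definition vzero {d} : vec d := fun _ => 0.
Definition vadd {d} (x y : vec d) : vec d := fun i => x i + y i.
Definition vscale {d} (c : R) (x : vec d) : vec d := fun i => c * x i.
Definition vopp {d} (x : vec d) : vec d := fun i => - x i.

Definition mulmv {d} (M : mat d) (x : vec d) : vec d :=
  fun i => \big[Rplus/0]_(j < d) (M i j * x j).
Definition mulmm {d} (M P : mat d) : mat d :=
  fun i k => \big[Rplus/0]_(j < d) (M i j * P j k).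
Definition idm {d} : mat d := fun i j => if i == j then 1 else 0.

Record is_norm {d} (N : vec d -> R) : Prop := {
  norm_nonneg : forall x, 0 <= N x;
  norm_def : forall x, N x = 0 -> x = vzero;
  norm_hom : forall c x, N (vscale c x) = Rabs c * N x;
  norm_triangle : forall x y, N (vadd x y) <= N x + N y }.

(* supremum / infimum of a set of reals (chosen least upper bound; all sets to
   which they are applied below are nonempty and bounded) *)
Definition sup (E : R -> Prop) : R :=
  epsilon (inhabits 0) (fun l => is_lub E l).
Definition inf (E : R -> Prop) : R := - sup (fun t => E (- t)).

Definition limsup (u : nat -> R) : R :=
  inf (fun t => exists n, t = sup (fun s => exists k, (n <= k)%nat /\ s = u k)).

Definition Rroot (n : nat) (t : R) : R :=
  if Rle_dec t 0 then 0 else Rpower t (/ INR n).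

Definition opnorm {d} (N : vec d -> R) (M : mat d) : R :=
  sup (fun t => exists x, N x = 1 /\ t = N (mulmv M x)).

(* prods A k M : M belongs to A^k (products A_{i_k} ... A_{i_1}); A^0 = {I} *)
Fixpoint prods {d r} (A : 'I_r -> mat d) (k : nat) (M : mat d) : Prop :=
  match k with
  | O => M = idm
  | S k' => exists i M', prods A k' M' /\ M = mulmm (A i) M'
  end.

(* ||A^n|| = max over products of length n *)
Definition setnorm_pow {d r} (N : vec d -> R) (A : 'I_r -> mat d) (n : nat) : R :=
  sup (fun t => exists M, prods A n M /\ t = opnorm N M).

(* ||A|| = max_i ||A_i|| *)
Definition setnorm {d r} (N : vec d -> R) (A : 'I_r -> mat d) : R :=
  sup (fun t => exists i, t = opnorm N (A i)).

Definition jsr {d r} (N : vec d -> R) (A : 'I_r -> mat d) : R :=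
  limsup (fun n => Rroot n (setnorm_pow N A n)).

Definition is_subspace {d} (V : vec d -> Prop) : Prop :=
  V vzero /\ (forall x y, V x -> V y -> V (vadd x y)) /\
  (forall c x, V x -> V (vscale c x)).

Definition irreducible {d r} (A : 'I_r -> mat d) : Prop :=
  forall V : vec d -> Prop, is_subspace V ->
    (forall i x, V x -> V (mulmv (A i) x)) ->
    (forall x, V x -> x = vzero) \/ (forall x, V x).

Definition Ap {d r} (A : 'I_r -> mat d) (p : nat) (x : vec d) (y : vec d) : Prop :=
  exists k M, (k <= p)%nat /\ prods A k M /\ y = mulmv M x.

Fixpoint comb {d} (l : list (R * vec d)) : vec d :=
  match l with
  | nil => vzero
  | cons (w, s) l' => vadd (vscale w s) (comb l')
  end.
Fixpoint wsum {d} (l : list (R * vec d)) : R :=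
  match l with
  | nil => 0
  | cons (w, _) l' => w + wsum l'
  end.
Definition conv {d} (S : vec d -> Prop) (y : vec d) : Prop :=
  exists l : list (R * vec d),
    List.Forall (fun ws => 0 <= fst ws /\ S (snd ws)) l /\
    wsum l = 1 /\ y = comb l.

Definition chi {d r} (N : vec d -> R) (A : 'I_r -> mat d) (p : nat) : R :=
  inf (fun c => exists x, N x = 1 /\
        c = sup (fun t => 0 <= t /\
              forall y, N y <= t ->
                conv (fun z => Ap A p x z \/ Ap A p (vopp x) z) y)).

(* Main.v *)
Set Warnings "-notation-overridden -ambiguous-paths -parsing -redundant-canonical-projection -HB.redundant -deprecated".
From HB Require Import structures.
Require Import Defs.
From Stdlib Require Import Reals Lra Lia ClassicalEpsilon FunctionalExtensionality PropExtensionality Classical.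
From mathcomp Require Import ssreflect ssrfun ssrbool eqtype ssrnat seq fintype bigop.
From mathcomp Require Import all_boot all_algebra.
Set Implicit Arguments.
Unset Strict Implicit.
Local Open Scope R_scope.

Definition R_eqb (x y : R) : bool := if Req_EM_T x y then true else false.
Lemma R_eqP : Equality.axiom R_eqb.
Proof. move=> x y; rewrite /R_eqb; case: Req_EM_T => h; constructor; auto. Qed.
HB.instance Definition _ := hasDecEq.Build R R_eqP.
Definition R_find (P : pred R) (n : nat) : option R :=
  match excluded_middle_informative (exists x, P x) with
  | left h => Some (proj1_sig (constructive_indefinite_description _ h))
  | right _ => None end.
Lemma R_find_correct P n x : R_find P n = Some x -> P x.
Proof. rewrite /R_find; case: excluded_middle_informative => // h [<-].
  exact: proj2_sig (constructive_indefinite_description _ h). Qed.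
Lemma R_find_complete (P : pred R) : (exists x, P x) -> exists n, R_find P n.
Proof. move=> h; exists 0%nat; rewrite /R_find; case: excluded_middle_informative => //. Qed.
Lemma R_find_ext (P Q : pred R) : P =1 Q -> R_find P =1 R_find Q.
Proof. move=> h; have -> : P = Q by apply: functional_extensionality. by []. Qed.
HB.instance Definition _ := hasChoice.Build R R_find_correct R_find_complete R_find_ext.
Lemma R_addA : associative Rplus. Proof. move=> x y z; lra. Qed.
Lemma R_addC : commutative Rplus. Proof. move=> x y; lra. Qed.
Lemma R_mulA : associative Rmult. Proof. move=> x y z; ring. Qed.
Lemma R_mulC : commutative Rmult. Proof. move=> x y; ring. Qed.
Lemma R_add0r : left_id 0 Rplus. Proof. move=> x; lra. Qed.
Lemma R_addNr : left_inverse 0 Ropp Rplus. Proof. move=> x; lra. Qed.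
HB.instance Definition _ := GRing.isZmodule.Build R R_addA R_addC R_add0r R_addNr.
Lemma R_mul1r : left_id 1 Rmult. Proof. move=> x; lra. Qed.
Lemma R_mulrDl : left_distributive Rmult Rplus. Proof. move=> x y z; lra. Qed.
Lemma R_one_neq0 : (1 : R) != 0.
Proof. apply/eqP; lra. Qed.
HB.instance Definition _ := GRing.Zmodule_isComNzRing.Build R R_mulA R_mulC R_mul1r R_mulrDl R_one_neq0.
Lemma R_mulVf (x : R) : x != 0 -> Rinv x * x = 1.
Proof. move/eqP=> h; field; auto. Qed.
HB.instance Definition _ := GRing.ComNzRing_isField.Build R R_mulVf Rinv_0.

HB.instance Definition _ := Monoid.isComLaw.Build R 0 Rplus R_addA R_addC R_add0r.

Lemma dep_vectors (d : nat) (v : 'I_d.+1 -> vec d) :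
  exists c : 'I_d.+1 -> R, (exists i, c i <> 0) /\
   forall k : 'I_d, \big[Rplus/0]_(i < d.+1) (c i * v i k) = 0.
Proof.
pose M : 'M[R]_(d.+1, d) := (\matrix_(i, k) v i k)%R.
pose K := kermx M.
have hK : (K != 0)%R.
  rewrite -mxrank_eq0 mxrank_ker; apply/eqP => h.
  have := rank_leq_col M; move/eqP: h; rewrite subn_eq0 => h1 h2.
  have := leq_trans h1 h2; by rewrite ltnn.
have [i hi] : exists i, (row i K != 0)%R.
  apply/existsP; move: hK; apply: contraR; rewrite negb_exists => /forallP h.
  apply/eqP/row_matrixP => i; rewrite row0; exact/eqP/negPn.
exists (fun j => K i j); split.
  apply: NNPP => h; move/negP: hi; apply; apply/eqP/rowP => j; rewrite [LHS]mxE [RHS]mxE.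
  apply: NNPP => hh; apply: h; exists j; exact hh.
move=> k.
have h0 : (row i (K *m M) = 0)%R by rewrite mulmx_ker row0.
move: (congr1 (fun A : 'M_(1, d) => A ord0 k) h0).
clearbody K; rewrite row_mul !mxE => h1.
rewrite -[RHS]h1.
apply: eq_bigr => j _; by rewrite !mxE.
Qed.

Lemma sup_lub (E : R -> Prop) : (exists x, E x) -> (exists b, forall x, E x -> x <= b) ->
  is_lub E (sup E).
Proof.
move=> [x hx] [b hb].
have [m hm] := completeness E (ex_intro _ b hb) (ex_intro _ x hx).
rewrite /sup; apply: (epsilon_spec (inhabits 0) (fun l => is_lub E l)); by exists m.
Qed.
Lemma sup_ub (E : R -> Prop) x : (exists b, forall x, E x -> x <= b) -> E x -> x <= sup E.
Proof. move=> hb hx; have [h _] := sup_lub (ex_intro _ x hx) hb; exact: h. Qed.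
Lemma sup_le (E : R -> Prop) b : (exists x, E x) -> (forall x, E x -> x <= b) -> sup E <= b.
Proof. move=> hx hb; have [_ h] := sup_lub hx (ex_intro _ b hb); exact: h. Qed.
Lemma sup_approx (E : R -> Prop) s : (exists x, E x) -> (exists b, forall x, E x -> x <= b) ->
  s < sup E -> exists x, E x /\ s < x.
Proof.
move=> hx hb hs; apply: NNPP => hn.
have : sup E <= s.
  apply: sup_le => // y hy; apply: Rnot_lt_le => hys; apply: hn; by exists y.
lra.
Qed.
Lemma inf_lb (E : R -> Prop) x : (exists b, forall x, E x -> b <= x) -> E x -> inf E <= x.
Proof.
move=> [b hb] hx; rewrite /inf.
have : - x <= sup (fun t => E (- t)).
  apply: sup_ub; last by rewrite Ropp_involutive.
  exists (- b) => y hy; have := hb _ hy; lra.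
lra.
Qed.
Lemma inf_glb (E : R -> Prop) b : (exists x, E x) -> (forall x, E x -> b <= x) -> b <= inf E.
Proof.
move=> [x hx] hb; rewrite /inf.
have : sup (fun t => E (- t)) <= - b.
  apply: sup_le; first by exists (- x); rewrite Ropp_involutive.
  move=> y hy; have := hb _ hy; lra.
lra.
Qed.

Lemma sup_ext (E F : R -> Prop) : (forall x, E x <-> F x) -> sup E = sup F.
Proof.
move=> h; have -> : E = F; last by [].
apply: functional_extensionality => x; apply: propositional_extensionality; exact: h.
Qed.

Section Vec.
Variable d : nat.
Implicit Types x y z : vec d.

Lemma vext x y : (forall i, x i = y i) -> x = y.
Proof. move=> h; exact: functional_extensionality. Qed.

Lemma vaddA : associative (@vadd d).
Proof. move=> x y z; apply: vext => i; rewrite /vadd; lra. Qed.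
Lemma vaddC : commutative (@vadd d).
Proof. move=> x y; apply: vext => i; rewrite /vadd; lra. Qed.
Lemma vadd0 : left_id vzero (@vadd d).
Proof. move=> x; apply: vext => i; rewrite /vadd /vzero; lra. Qed.
End Vec.

HB.instance Definition _ (d : nat) := Monoid.isComLaw.Build (vec d) vzero (@vadd d) (@vaddA d) (@vaddC d) (@vadd0 d).

Lemma big_vec_coord (d : nat) (I : Type) (r : seq I) (P : pred I) (F : I -> vec d) k :
  (\big[vadd/vzero]_(i <- r | P i) F i) k = \big[Rplus/0]_(i <- r | P i) F i k.
Proof.
apply: (big_morph (fun v : vec d => v k)) => //.
Qed.

Lemma comb_coord (d : nat) (l : list (R * vec d)) k :
  comb l k = \big[Rplus/0]_(ws <- l) (ws.1 * ws.2 k).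
Proof.
elim: l => [|[w s] l IH] /=; first by rewrite big_nil.
by rewrite big_cons /vadd /vscale IH.
Qed.

Lemma wsum_big (d : nat) (l : list (R * vec d)) : wsum l = \big[Rplus/0]_(ws <- l) ws.1.
Proof. elim: l => [|[w s] l IH] /=; by rewrite ?big_nil ?big_cons ?IH. Qed.

Lemma comb_cat (d : nat) (l1 l2 : list (R * vec d)) : comb (l1 ++ l2) = vadd (comb l1) (comb l2).
Proof. apply: vext => k; rewrite /vadd !comb_coord big_cat //. Qed.
Lemma wsum_cat (d : nat) (l1 l2 : list (R * vec d)) : wsum (l1 ++ l2) = wsum l1 + wsum l2.
Proof. rewrite !wsum_big big_cat //. Qed.

Definition incr (phi : nat -> nat) := forall k, (phi k < phi k.+1)%N.

Lemma incr_mono phi : incr phi -> forall k k', (k <= k')%N -> (phi k <= phi k')%N.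
Proof.
move=> h k k' hk; elim: k' hk => [|k' IH]; first by rewrite leqn0 => /eqP ->.
rewrite leq_eqVlt => /orP [/eqP -> //|hk].
apply: leq_trans (IH hk) (ltnW (h k')).
Qed.
Lemma incr_ge phi : incr phi -> forall k, (k <= phi k)%N.
Proof. move=> h; elim=> [//|k IH]; exact: leq_ltn_trans IH (h k). Qed.
Lemma incr_comp phi psi : incr phi -> incr psi -> incr (fun k => phi (psi k)).
Proof. move=> h1 h2 k; apply: (leq_trans (h1 (psi k))); apply: incr_mono => //; exact: h2. Qed.

Lemma cv_sub (u : nat -> R) L phi : incr phi -> Un_cv u L -> Un_cv (fun k => u (phi k)) L.
Proof.
move=> hphi hu eps he; have [M hM] := hu eps he; exists M => k hk; apply: hM.
apply/leP; apply: leq_trans (incr_ge hphi k); exact/leP.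
Qed.

Lemma extract1 (u : nat -> R) : (forall k, Rabs (u k) <= 1) ->
  exists phi L, incr phi /\ Un_cv (fun k => u (phi k)) L.
Proof.
move=> hb.
have [l hl] := Bolzano_Weierstrass u (fun c => -1 <= c <= 1) (compact_P3 (-1) 1)
  (fun k => ltac:(have := hb k; move=> hh; split; [have := Rle_abs (- u k); rewrite Rabs_Ropp | have := Rle_abs (u k)]; lra)).
have hnext : forall m k : nat, exists p, (m <= p)%N /\ Rabs (u p - l) < / INR k.+1.
  move=> m k.
  have hpos : 0 < / INR k.+1 by apply: Rinv_0_lt_compat; apply: lt_0_INR; lia.
  have [p [hp1 hp2]] := hl (disc l (mkposreal _ hpos)) m
    (ex_intro _ (mkposreal _ hpos) (fun y hy => hy)).
  exists p; split; [exact/leP | exact hp2].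
pose next m k := epsilon (inhabits 0%N) (fun p => (m <= p)%N /\ Rabs (u p - l) < / INR k.+1).
have hn : forall m k, (m <= next m k)%N /\ Rabs (u (next m k) - l) < / INR k.+1.
  move=> m k; exact: (epsilon_spec (inhabits 0%N) _ (hnext m k)).
pose fix phi k := match k with 0%N => next 0%N 0%N | k'.+1 => next (phi k').+1 k'.+1 end.
exists phi, l; split.
  move=> k /=; exact: (hn _ _).1.
have hphi : forall k, Rabs (u (phi k) - l) < / INR k.+1.
  by case=> [|k] /=; apply: (hn _ _).2.
move=> eps he.
have [M hM] := archimed_cor1 eps he.
exists M => k hk; rewrite /Rdist.
apply: Rlt_trans (hphi k) _.
apply: Rle_lt_trans _ hM.1; apply: Rinv_le_contravar; first by apply: lt_0_INR; move: hM => [_ hh]; lia.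
apply: le_INR; lia.
Qed.

Lemma extract (I : Type) (l : list I) (u : nat -> I -> R) :
  (forall k i, Rabs (u k i) <= 1) ->
  exists phi, incr phi /\ forall i, List.In i l -> exists L, Un_cv (fun k => u (phi k) i) L.
Proof.
move=> hb; elim: l => [|a l [phi1 [h1 h2]]].
  by exists id; split => // k /=.
have [phi2 [L [h3 h4]]] := extract1 (fun k => hb (phi1 k) a).
exists (fun k => phi1 (phi2 k)); split; first exact: incr_comp.
move=> i [<-|hi]; first by exists L.
have [L' hL'] := h2 i hi; exists L'; exact: (cv_sub h3 hL').
Qed.

Lemma compact_lb (I : Type) (l : list I) (P : (I -> R) -> Prop) (f : (I -> R) -> R) :
  (forall z, P z -> forall i, Rabs (z i) <= 1) ->
  (forall (zs : nat -> I -> R) z, (forall k, P (zs k)) ->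
      (forall i, List.In i l -> Un_cv (fun k => zs k i) (z i)) ->
      P z /\ Un_cv (fun k => f (zs k)) (f z)) ->
  (forall z, P z -> 0 < f z) ->
  exists g, 0 < g /\ forall z, P z -> g <= f z.
Proof.
move=> hb hc hpos; apply: NNPP => hn.
have hk : forall k : nat, exists z, P z /\ f z < / INR k.+1.
  move=> k; apply: NNPP => hk; apply: hn; exists (/ INR k.+1); split.
    apply: Rinv_0_lt_compat; apply: lt_0_INR; lia.
  move=> z hz; apply: Rnot_lt_le => hlt; apply: hk; by exists z.
have [pz0] : exists z : I -> R, True by exists (fun _ => 0).
move=> _.
pose zs k := epsilon (inhabits (fun _ : I => 0)) (fun z => P z /\ f z < / INR k.+1).
have hzs : forall k, P (zs k) /\ f (zs k) < / INR k.+1.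
  move=> k; exact: (epsilon_spec (inhabits (fun _ : I => 0)) _ (hk k)).
have [phi [hphi hcv]] := extract l (fun k i => hb _ (hzs k).1 i).
pose z i := epsilon (inhabits 0) (fun L => Un_cv (fun k => zs (phi k) i) L).
have hz : forall i, List.In i l -> Un_cv (fun k => zs (phi k) i) (z i).
  move=> i hi; exact: (epsilon_spec (inhabits 0) _ (hcv i hi)).
have [hPz hfz] := hc (fun k => zs (phi k)) z (fun k => (hzs (phi k)).1) hz.
have hp := hpos z hPz.
have [M hM] := hfz (f z / 2) ltac:(lra).
have [M2 hM2] := archimed_cor1 (f z / 2) ltac:(lra).
pose K := maxn M M2.
have := hM K ltac:(apply/leP; exact: leq_maxl).
rewrite /Rdist => /Rabs_def2 [h1 h2].
have h3 := (hzs (phi K)).2.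
have : / INR (phi K).+1 <= / INR M2.
  apply: Rinv_le_contravar; first by apply: lt_0_INR; lia.
  apply: le_INR; apply/leP.
  apply: leq_trans (leq_maxr M M2) _; apply: leq_trans (incr_ge hphi K) _; exact: leqnSn.
lra.
Qed.

Lemma inIn (T : eqType) (x : T) (s : seq T) : x \in s -> List.In x s.
Proof. elim: s => [//|a s IH]; rewrite inE => /orP [/eqP ->|h]; [by left|right; exact: IH]. Qed.

Lemma big_Rle (I : Type) (r : seq I) (P : pred I) (F G : I -> R) :
  (forall i, P i -> F i <= G i) ->
  \big[Rplus/0]_(i <- r | P i) F i <= \big[Rplus/0]_(i <- r | P i) G i.
Proof. move=> h; apply: (big_ind2 (fun a b => a <= b)) => //; [lra| move=> *; lra]. Qed.
Lemma big_Rnonneg (I : Type) (r : seq I) (P : pred I) (F : I -> R) :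
  (forall i, P i -> 0 <= F i) -> 0 <= \big[Rplus/0]_(i <- r | P i) F i.
Proof. move=> h; apply: (big_ind (fun a => 0 <= a)) => //; [lra| move=> *; lra]. Qed.
Lemma big_Rmull (I : Type) (r : seq I) (P : pred I) (F : I -> R) c :
  c * \big[Rplus/0]_(i <- r | P i) F i = \big[Rplus/0]_(i <- r | P i) (c * F i).
Proof.
elim: r => [|a r IH]; first by rewrite !big_nil; ring.
rewrite !big_cons; case: (P a) => //; rewrite -IH; ring.
Qed.
Lemma big_Rplus (I : Type) (r : seq I) (P : pred I) (F G : I -> R) :
  \big[Rplus/0]_(i <- r | P i) (F i + G i) =
  \big[Rplus/0]_(i <- r | P i) F i + \big[Rplus/0]_(i <- r | P i) G i.
Proof.
elim: r => [|a r IH]; first by rewrite !big_nil; ring.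
rewrite !big_cons; case: (P a) => //; rewrite IH; ring.
Qed.
Lemma big_Ropp (I : Type) (r : seq I) (P : pred I) (F : I -> R) :
  \big[Rplus/0]_(i <- r | P i) (- F i) = - \big[Rplus/0]_(i <- r | P i) F i.
Proof.
elim: r => [|a r IH]; first by rewrite !big_nil; ring.
rewrite !big_cons; case: (P a) => //; rewrite IH; ring.
Qed.
Lemma big_Rabs (I : Type) (r : seq I) (P : pred I) (F : I -> R) :
  Rabs (\big[Rplus/0]_(i <- r | P i) F i) <= \big[Rplus/0]_(i <- r | P i) Rabs (F i).
Proof.
apply: (big_ind2 (fun a b => Rabs a <= b)); first by rewrite Rabs_R0; lra.
  move=> a b c e h1 h2; apply: Rle_trans (Rabs_triang _ _) _; lra.
move=> *; lra.
Qed.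
Lemma cv_big (I : Type) (r : seq I) (P : pred I) (F : nat -> I -> R) (G : I -> R) :
  (forall i, P i -> Un_cv (fun k => F k i) (G i)) ->
  Un_cv (fun k => \big[Rplus/0]_(i <- r | P i) F k i) (\big[Rplus/0]_(i <- r | P i) G i).
Proof.
move=> h; elim: r => [|a r IH].
  apply: (Un_cv_ext (fun _ => 0)); first by move=> k; rewrite big_nil.
  rewrite big_nil => e he; exists 0%nat => k _; rewrite /Rdist Rminus_diag Rabs_R0; lra.
rewrite big_cons; case ha: (P a).
  apply: (Un_cv_ext (fun k => F k a + \big[Rplus/0]_(i <- r | P i) F k i)).
    by move=> k; rewrite big_cons ha.
  apply: CV_plus => //; exact: h.
apply: (Un_cv_ext (fun k => \big[Rplus/0]_(i <- r | P i) F k i)) => //.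
by move=> k; rewrite big_cons ha.
Qed.

Lemma sum_enum d (F : 'I_d -> R) :
  \big[Rplus/0]_(i <- enum 'I_d) F i = \big[Rplus/0]_(i < d) F i.
Proof. by rewrite big_enum /=; apply: eq_bigl => i; rewrite inE. Qed.

Definition unitv {d} (i : 'I_d) : vec d := fun j => if j == i then 1 else 0.
Definition s1 {d} (x : vec d) : R := \big[Rplus/0]_(i < d) Rabs (x i).
Definition vsub {d} (x y : vec d) : vec d := vadd x (vopp y).

Lemma sum_unit d (F : 'I_d -> R) k : \big[Rplus/0]_(i < d) (F i * unitv i k) = F k.
Proof.
rewrite (bigD1 k) //= big1; first by rewrite /unitv eqxx; ring.
by move=> i /negPf hi; rewrite /unitv eq_sym hi; ring.
Qed.

Lemma s1_ge d (x : vec d) i : Rabs (x i) <= s1 x.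
Proof.
rewrite /s1 (bigD1 i) //=; set S := \big[_/_]_(_ | _) _.
have : 0 <= S by apply: big_Rnonneg => j _; exact: Rabs_pos.
lra.
Qed.
Lemma s1_nonneg d (x : vec d) : 0 <= s1 x.
Proof. apply: big_Rnonneg => i _; exact: Rabs_pos. Qed.
Lemma s1_scale d c (x : vec d) : s1 (vscale c x) = Rabs c * s1 x.
Proof. rewrite /s1 big_Rmull; apply: eq_bigr => i _; by rewrite /vscale Rabs_mult. Qed.
Lemma s1_zero d (x : vec d) : s1 x = 0 -> x = vzero.
Proof.
move=> h; apply: vext => i; have := s1_ge x i; rewrite h /vzero => h1.
have := Rabs_pos (x i) => h2; have : Rabs (x i) = 0 by lra.
move=> h3; rewrite /vzero; apply: NNPP => hh; exact: (Rabs_no_R0 (x i) hh h3).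
Qed.
Lemma s1_add d (x y : vec d) : s1 (vadd x y) <= s1 x + s1 y.
Proof.
rewrite /s1 -big_Rplus; apply: big_Rle => i _; exact: Rabs_triang.
Qed.

Section Norm.
Variable d : nat.
Variable N : vec d -> R.
Hypothesis hN : is_norm N.

Lemma Nzero : N vzero = 0.
Proof.
have -> : (vzero : vec d) = vscale 0 vzero by apply: vext => i; rewrite /vscale /vzero; ring.
rewrite (norm_hom hN) Rabs_R0; ring.
Qed.
Lemma normopp x : N (vopp x) = N x.
Proof.
have -> : vopp x = vscale (-1) x by apply: vext => i; rewrite /vscale /vopp; ring.
rewrite (norm_hom hN) Rabs_Ropp Rabs_R1; ring.
Qed.
Lemma Nge0 x : 0 <= N x. Proof. exact: norm_nonneg hN x. Qed.
Lemma Nsub_le x y : N x - N y <= N (vsub x y).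
Proof.
have e : x = vadd (vsub x y) y by apply: vext => i; rewrite /vsub /vadd /vopp; ring.
have := norm_triangle hN (vsub x y) y; rewrite -e; lra.
Qed.
Lemma Nscale c x : N (vscale c x) = Rabs c * N x. Proof. exact: norm_hom. Qed.
Lemma Nnzpos x : x <> vzero -> 0 < N x.
Proof.
move=> hx; have := Nge0 x; case/Rle_lt_or_eq_dec => // h.
by exfalso; apply: hx; apply: (norm_def hN); rewrite h.
Qed.

Lemma Ncomb (l : list (R * vec d)) :
  N (comb l) <= \big[Rplus/0]_(ws <- l) (Rabs ws.1 * N ws.2).
Proof.
elim: l => [|[w s] l IH] /=; first by rewrite big_nil Nzero; lra.
rewrite big_cons /=; apply: Rle_trans (norm_triangle hN _ _) _.
rewrite (norm_hom hN); lra.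
Qed.

Lemma decomp (x : vec d) : x = comb [seq (x i, unitv i) | i <- enum 'I_d].
Proof.
apply: vext => k; rewrite comb_coord big_map big_enum /=.
by rewrite (sum_unit (fun i => x i)).
Qed.

Definition Cup := \big[Rplus/0]_(i < d) N (unitv i).
Lemma Cup_ge0 : 0 <= Cup.
Proof. apply: big_Rnonneg => i _; exact: Nge0. Qed.
Lemma N_le_s1 x : N x <= Cup * s1 x.
Proof.
rewrite {1}(decomp x); apply: Rle_trans (Ncomb _) _.
rewrite big_map sum_enum [Cup * _]Rmult_comm /Cup big_Rmull.
apply: big_Rle => i _ /=; apply: Rmult_le_compat_r; first exact: Nge0.
exact: s1_ge.
Qed.

Lemma N_cont (zs : nat -> vec d) z : (forall i, Un_cv (fun k => zs k i) (z i)) ->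
  Un_cv (fun k => N (zs k)) (N z).
Proof.
move=> h.
have hs : Un_cv (fun k => s1 (vsub (zs k) z)) 0.
  have -> : 0 = \big[Rplus/0]_(i < d) 0 by rewrite big1.
  apply: cv_big => i _ e he; have [M hM] := h i e he; exists M => k hk.
  have := hM k hk; rewrite /Rdist /vsub /vadd /vopp Rminus_0_r Rabs_Rabsolu; move=> hh; exact hh.
move=> e he.
have [M hM] := hs (e / (Cup + 1)) ltac:(apply: Rdiv_lt_0_compat => //; have := Cup_ge0; lra).
exists M => k hk; have := hM k hk; rewrite /Rdist Rminus_0_r => h1.
rewrite Rabs_right in h1; last by apply: Rle_ge; exact: s1_nonneg.
have h2 := Nsub_le (zs k) z; have h3 := Nsub_le z (zs k).
have e1 : N (vsub z (zs k)) = N (vsub (zs k) z).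
  rewrite -normopp; congr N; apply: vext => i; rewrite /vsub /vopp /vadd; ring.
have h4 := N_le_s1 (vsub (zs k) z).
have h5 : Cup * s1 (vsub (zs k) z) <= Cup * (e / (Cup + 1)).
  apply: Rmult_le_compat_l; [exact: Cup_ge0| lra].
have h6 : Cup * (e / (Cup + 1)) < e.
  have hc := Cup_ge0; apply: (Rmult_lt_reg_r (Cup + 1)); first lra.
  field_simplify; lra.
apply: Rabs_def1; lra.
Qed.

Lemma norm_equiv : exists c, 0 < c /\ forall x, c * s1 x <= N x.
Proof.
have hc : forall (zs : nat -> 'I_d -> R) z, (forall k, s1 (zs k) = 1) ->
      (forall i, List.In i (enum 'I_d) -> Un_cv (fun k => zs k i) (z i)) ->
      s1 z = 1 /\ Un_cv (fun k => N (zs k)) (N z).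
  move=> zs z hzs hcv.
  have hcv' : forall i, Un_cv (fun k => zs k i) (z i) by move=> i; apply: hcv; apply: inIn; exact: mem_enum.
  split; last exact: N_cont.
  have h1 : Un_cv (fun k => s1 (zs k)) (s1 z).
    apply: cv_big => i _; exact: cv_cvabs.
  apply: (UL_sequence _ _ _ h1); move=> e he; exists 0%nat => k _; rewrite hzs /Rdist Rminus_diag Rabs_R0; lra.
have hp : forall z : vec d, s1 z = 1 -> 0 < N z.
  move=> z hz; apply: Nnzpos => h; move: hz; rewrite h /s1 big1 //; first lra.
  move=> i _; rewrite /vzero Rabs_R0 //.
have [g [hg hge]] := @compact_lb 'I_d (enum 'I_d) (fun z => s1 z = 1) N
  (fun z hz i => ltac:(rewrite -hz; exact: s1_ge)) hc hp.
exists g; split => // x.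
case: (Req_dec (s1 x) 0) => h0.
  rewrite h0 Rmult_0_r; exact: Nge0.
have hp' : 0 < s1 x by have := s1_nonneg x; lra.
have := hge (vscale (/ s1 x) x).
rewrite s1_scale Rabs_right; last by apply: Rle_ge; apply: Rlt_le; apply: Rinv_0_lt_compat.
rewrite (norm_hom hN) Rabs_right; last by apply: Rle_ge; apply: Rlt_le; apply: Rinv_0_lt_compat.
move=> h; have {}h := h ltac:(field; lra).
have := Rmult_le_compat_l (s1 x) _ _ (Rlt_le _ _ hp') h.
have -> : s1 x * (/ s1 x * N x) = N x by field; lra.
lra.
Qed.
End Norm.

Lemma big_Rmulr (I : Type) (r : seq I) (P : pred I) (F : I -> R) c :
  \big[Rplus/0]_(i <- r | P i) F i * c = \big[Rplus/0]_(i <- r | P i) (F i * c).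
Proof. rewrite Rmult_comm big_Rmull; apply: eq_bigr => i _; ring. Qed.

Section Mat.
Variable d : nat.
Implicit Types (M P Q : mat d) (x y : vec d).

Lemma mext M P : (forall i j, M i j = P i j) -> M = P.
Proof. move=> h; apply: functional_extensionality => i; apply: functional_extensionality => j; exact: h. Qed.

Lemma mulmv_add M x y : mulmv M (vadd x y) = vadd (mulmv M x) (mulmv M y).
Proof. apply: vext => i; rewrite /mulmv /vadd -big_Rplus; apply: eq_bigr => j _; ring. Qed.
Lemma mulmv_scale M c x : mulmv M (vscale c x) = vscale c (mulmv M x).
Proof. apply: vext => i; rewrite /mulmv /vscale big_Rmull; apply: eq_bigr => j _; ring. Qed.
Lemma mulmv_opp M x : mulmv M (vopp x) = vopp (mulmv M x).
Proof. apply: vext => i; rewrite /mulmv /vopp -big_Ropp; apply: eq_bigr => j _; ring. Qed.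
Lemma mulmv_zero M : mulmv M vzero = vzero.
Proof. apply: vext => i; rewrite /mulmv /vzero big1 // => j _; ring. Qed.
Lemma mulmv_comb M (l : list (R * vec d)) :
  mulmv M (comb l) = comb (List.map (fun ws => (ws.1, mulmv M ws.2)) l).
Proof.
elim: l => [|[w s] l IH] /=; first exact: mulmv_zero.
by rewrite mulmv_add mulmv_scale IH.
Qed.

Lemma mulmvA M P x : mulmv (mulmm M P) x = mulmv M (mulmv P x).
Proof.
apply: vext => i; rewrite /mulmv /mulmm.
under eq_bigr => j _ do rewrite big_Rmulr.
rewrite exchange_big /=; apply: eq_bigr => l _; rewrite big_Rmull; apply: eq_bigr => j _; ring.
Qed.
Lemma mulmmA M P Q : mulmm (mulmm M P) Q = mulmm M (mulmm P Q).
Proof.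
apply: mext => i k; rewrite /mulmm.
under eq_bigr => j _ do rewrite big_Rmulr.
rewrite exchange_big /=; apply: eq_bigr => l _; rewrite big_Rmull; apply: eq_bigr => j _; ring.
Qed.
Lemma mulmv_id x : mulmv idm x = x.
Proof.
apply: vext => i; rewrite /mulmv /idm (bigD1 i) //= eqxx big1; first ring.
by move=> j /negPf hj; rewrite eq_sym hj; ring.
Qed.
Lemma mulmm_id_l M : mulmm idm M = M.
Proof.
apply: mext => i k; rewrite /mulmm /idm (bigD1 i) //= eqxx big1; first ring.
by move=> j /negPf hj; rewrite eq_sym hj; ring.
Qed.
Lemma mulmm_id_r M : mulmm M idm = M.
Proof.
apply: mext => i k; rewrite /mulmm /idm (bigD1 k) //= eqxx big1; first ring.
by move=> j /negPf hj; rewrite hj; ring.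
Qed.

Definition Kmat M := \big[Rplus/0]_(i < d) \big[Rplus/0]_(j < d) Rabs (M i j).
Lemma s1_mulmv M x : s1 (mulmv M x) <= Kmat M * s1 x.
Proof.
rewrite /s1 /Kmat big_Rmulr; apply: big_Rle => i _; rewrite /mulmv.
apply: Rle_trans (big_Rabs _ _ _) _; rewrite big_Rmulr; apply: big_Rle => j _.
rewrite Rabs_mult; apply: Rmult_le_compat_l; [exact: Rabs_pos| exact: s1_ge].
Qed.
End Mat.

Section Prods.
Variables d r : nat.
Variable A : 'I_r -> mat d.

Lemma prods_mul a b X Y : prods A a X -> prods A b Y -> prods A (a + b) (mulmm X Y).
Proof.
elim: a X => [|a IH] X /=.
  by move=> -> hY; rewrite add0n mulmm_id_l.
move=> [i [X' [hX' ->]]] hY; exists i, (mulmm X' Y); split.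
  exact: IH.
by rewrite mulmmA.
Qed.
Lemma prods_split a b Q : prods A (a + b) Q -> exists X Y, prods A a X /\ prods A b Y /\ Q = mulmm X Y.
Proof.
elim: a Q => [|a IH] Q /=.
  move=> hQ; exists idm, Q; rewrite mulmm_id_l; by split.
move=> [i [Q' [hQ' ->]]].
have [X [Y [hX [hY ->]]]] := IH _ hQ'.
exists (mulmm (A i) X), Y; split; [by exists i, X|split => //].
by rewrite mulmmA.
Qed.

Fixpoint plist (k : nat) : list (mat d) :=
  match k with
  | O => idm :: nil
  | S k => List.flat_map (fun M => List.map (fun i => mulmm (A i) M) (enum 'I_r)) (plist k)
  end.
Lemma plistP k M : List.In M (plist k) <-> prods A k M.
Proof.
elim: k M => [|k IH] M /=.
  split; [by move=> [<-|[]] | by move=> ->; left].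
rewrite List.in_flat_map; split.
  move=> [M' [hM' /List.in_map_iff [i [<- _]]]]; exists i, M'; split => //; exact/IH.
move=> [i [M' [hM' ->]]]; exists M'; split; first exact/IH.
apply/List.in_map_iff; exists i; split => //; apply: inIn; exact: mem_enum.
Qed.

Hypothesis hr : (0 < r)%N.
Lemma prods_ex k : exists M, prods A k M.
Proof.
elim: k => [|k [M hM]]; first by exists idm.
exists (mulmm (A (Ordinal hr)) M), (Ordinal hr), M; by split.
Qed.
End Prods.

Lemma big_In_le (T : Type) (l : list T) (f : T -> R) x :
  (forall y, 0 <= f y) -> List.In x l -> f x <= \big[Rplus/0]_(y <- l) f y.
Proof.
move=> h; elim: l => [//|a l IH] /= [<-|hx]; rewrite big_cons.
  have := @big_Rnonneg _ l xpredT f (fun y _ => h y); lra.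
have := IH hx; have := h a; lra.
Qed.

Section Op.
Variables d r : nat.
Variable A : 'I_r -> mat d.
Variable N : vec d -> R.
Hypothesis hN : is_norm N.
Hypothesis hd : (0 < d)%N.
Hypothesis hr : (0 < r)%N.

Lemma unit_ex : exists x, N x = 1.
Proof.
pose e := unitv (Ordinal hd).
have he : e <> vzero.
  move=> h; have := congr1 (fun v => v (Ordinal hd)) h; rewrite /e /unitv /vzero eqxx; lra.
have hp := Nnzpos hN he.
exists (vscale (/ N e) e); rewrite (norm_hom hN) Rabs_right; first by field; lra.
apply: Rle_ge; apply: Rlt_le; exact: Rinv_0_lt_compat.
Qed.

Lemma opK (M : mat d) : exists K, 0 <= K /\ forall x, N (mulmv M x) <= K * N x.
Proof.
have [c [hc hcN]] := norm_equiv hN.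
have hK : 0 <= Kmat M by apply: big_Rnonneg => i _; apply: big_Rnonneg => j _; exact: Rabs_pos.
have hC := Cup_ge0 hN.
exists (Cup N * Kmat M / c); split.
  apply: Rmult_le_pos; [exact: Rmult_le_pos| apply: Rlt_le; exact: Rinv_0_lt_compat].
move=> x; apply: Rle_trans (N_le_s1 hN _) _.
apply: Rle_trans (Rmult_le_compat_l _ _ _ hC (s1_mulmv M x)) _.
have h1 := hcN x; have h2 := s1_nonneg x.
have : s1 x <= N x / c by apply: (Rmult_le_reg_l c) => //; field_simplify; lra.
move=> h3; have := Rmult_le_compat_l _ _ _ (Rmult_le_pos _ _ hC hK) h3.
have -> : Cup N * Kmat M * (N x / c) = Cup N * Kmat M / c * N x by field; lra.
rewrite Rmult_assoc; lra.
Qed.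

Lemma op_lub (M : mat d) : is_lub (fun t => exists x, N x = 1 /\ t = N (mulmv M x)) (opnorm N M).
Proof.
apply: sup_lub.
  have [x hx] := unit_ex; by exists (N (mulmv M x)), x.
have [K [_ hK]] := opK M; exists K => t [x [hx ->]]; have := hK x; rewrite hx; lra.
Qed.
Lemma op_ge1 M x : N x = 1 -> N (mulmv M x) <= opnorm N M.
Proof. move=> hx; have [h _] := op_lub M; apply: h; by exists x. Qed.
Lemma op_nonneg M : 0 <= opnorm N M.
Proof. have [x hx] := unit_ex; apply: Rle_trans (op_ge1 M hx); exact: Nge0. Qed.
Lemma op_ge M x : N (mulmv M x) <= opnorm N M * N x.
Proof.
case: (classic (x = vzero)) => [->|hx].
  rewrite mulmv_zero (Nzero hN); have := op_nonneg M; nra.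
have hp := Nnzpos hN hx.
have hu : N (vscale (/ N x) x) = 1.
  rewrite (norm_hom hN) Rabs_right; first by field; lra.
  apply: Rle_ge; apply: Rlt_le; exact: Rinv_0_lt_compat.
have := op_ge1 M hu; rewrite mulmv_scale (norm_hom hN) Rabs_right; last first.
  apply: Rle_ge; apply: Rlt_le; exact: Rinv_0_lt_compat.
move=> h; have := Rmult_le_compat_l _ _ _ (Rlt_le _ _ hp) h.
have -> : N x * (/ N x * N (mulmv M x)) = N (mulmv M x) by field; lra.
lra.
Qed.
Lemma op_le M b : (forall x, N x = 1 -> N (mulmv M x) <= b) -> opnorm N M <= b.
Proof. move=> h; have [_ h2] := op_lub M; apply: h2 => t [x [hx ->]]; exact: h. Qed.
Lemma op_approx M s : s < opnorm N M -> exists x, N x = 1 /\ s < N (mulmv M x).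
Proof.
move=> hs; apply: NNPP => hn.
have : opnorm N M <= s.
  apply: op_le => x hx; apply: Rnot_lt_le => hlt; apply: hn; by exists x.
lra.
Qed.
Lemma op_mul M P : opnorm N (mulmm M P) <= opnorm N M * opnorm N P.
Proof.
apply: op_le => x hx; rewrite mulmvA; apply: Rle_trans (op_ge M _) _.
apply: Rmult_le_compat_l; first exact: op_nonneg.
have := op_ge P x; rewrite hx; lra.
Qed.
Lemma op_id : opnorm N idm = 1.
Proof.
apply: Rle_antisym.
  apply: op_le => x hx; rewrite mulmv_id; lra.
have [x hx] := unit_ex; have := op_ge1 idm hx; rewrite mulmv_id; lra.
Qed.

Notation b k := (setnorm_pow N A k).

Lemma b_lub k : is_lub (fun t => exists M, prods A k M /\ t = opnorm N M) (b k).
Proof.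
apply: sup_lub.
  have [M hM] := prods_ex A hr k; by exists (opnorm N M), M.
exists (\big[Rplus/0]_(M <- plist A k) opnorm N M) => t [M [hM ->]].
apply: big_In_le; [exact: op_nonneg| exact/plistP].
Qed.
Lemma b_ge k M : prods A k M -> opnorm N M <= b k.
Proof. move=> hM; have [h _] := b_lub k; apply: h; by exists M. Qed.
Lemma b_le k v : (forall M, prods A k M -> opnorm N M <= v) -> b k <= v.
Proof. move=> h; have [_ h2] := b_lub k; apply: h2 => t [M [hM ->]]; exact: h. Qed.
Lemma b_approx k s : s < b k -> exists M, prods A k M /\ s < opnorm N M.
Proof.
move=> hs; apply: NNPP => hn.
have : b k <= s.
  apply: b_le => M hM; apply: Rnot_lt_le => hlt; apply: hn; by exists M.
lra.
Qed.
Lemma b_nonneg k : 0 <= b k.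
Proof. have [M hM] := prods_ex A hr k; apply: Rle_trans (b_ge hM); exact: op_nonneg. Qed.
Lemma b0 : b 0 = 1.
Proof.
apply: Rle_antisym; first by apply: b_le => M /= ->; rewrite op_id; lra.
have := @b_ge 0 idm erefl; rewrite op_id; lra.
Qed.
Lemma b_mul k l : b (k + l) <= b k * b l.
Proof.
apply: b_le => Q hQ; have [X [Y [hX [hY ->]]]] := prods_split hQ.
apply: Rle_trans (op_mul X Y) _.
apply: Rmult_le_compat; [exact: op_nonneg|exact: op_nonneg|exact: b_ge|exact: b_ge].
Qed.
Lemma b_pow k : b k <= b 1 ^ k.
Proof.
elim: k => [|k IH]; first by rewrite b0 /=; lra.
have := b_mul 1 k; rewrite add1n /= => h; apply: Rle_trans h _.
apply: Rmult_le_compat_l => //; exact: b_nonneg.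
Qed.
Lemma b1E : setnorm N A = b 1.
Proof.
apply: sup_ext => t; split.
  move=> [i ->]; exists (A i); split => //; exists i, idm; split => //; by rewrite mulmm_id_r.
move=> [M [[i [M' [-> ->]]] ->]]; exists i; by rewrite mulmm_id_r.
Qed.
End Op.

Lemma INR_posn n : (0 < n)%N -> 0 < INR n.
Proof. move=> h; apply: lt_0_INR; exact/ltP. Qed.
Lemma INR_nzn n : (0 < n)%N -> INR n <> 0.
Proof. move=> h; have := INR_posn h; lra. Qed.
Lemma exp_mono x y : x <= y -> exp x <= exp y.
Proof. case=> h; [apply: Rlt_le; exact: exp_increasing| rewrite h; lra]. Qed.
Lemma ln_mono x y : 0 < x -> x <= y -> ln x <= ln y.
Proof. move=> hx; case=> h; [apply: Rlt_le; exact: ln_increasing| rewrite h; lra]. Qed.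
Lemma Rpower_pos x y : 0 < Rpower x y.
Proof. exact: exp_pos. Qed.
Lemma Rroot_pos n t : 0 < t -> Rroot n t = Rpower t (/ INR n).
Proof. rewrite /Rroot => h; case: Rle_dec => // h'; lra. Qed.
Lemma Rroot_nonpos n t : t <= 0 -> Rroot n t = 0.
Proof. rewrite /Rroot => h; case: Rle_dec => // h'; lra. Qed.
Lemma Rroot_nonneg n t : 0 <= Rroot n t.
Proof. rewrite /Rroot; case: Rle_dec => hh /=; [lra| apply: Rlt_le; exact: Rpower_pos]. Qed.
Lemma Rpower_inv_pow (c : R) (n : nat) : 0 < c -> (0 < n)%N -> Rpower c (/ INR n) ^ n = c.
Proof.
move=> hc hn; rewrite -Rpower_pow; last exact: Rpower_pos.
rewrite Rpower_mult Rinv_l ?Rpower_1 //; exact: INR_nzn.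
Qed.
Lemma Rpower_dec c x y : 0 < c <= 1 -> x <= y -> Rpower c y <= Rpower c x.
Proof.
move=> [h1 h2] hxy; rewrite /Rpower; apply: exp_mono.
have : ln c <= 0 by rewrite -ln_1; apply: ln_mono.
nra.
Qed.
Lemma root_pow_le (rho : R) (c : R) (n : nat) : 0 < c -> (0 < n)%N ->
  Rpower c (/ INR n) <= rho -> c <= rho ^ n.
Proof.
move=> hc hn h; rewrite -(Rpower_inv_pow hc hn); apply: pow_incr; split => //.
apply: Rlt_le; exact: Rpower_pos.
Qed.

Section Limsup.
Variables d r : nat.
Variable A : 'I_r -> mat d.
Variable N : vec d -> R.
Hypothesis hN : is_norm N.
Hypothesis hd : (0 < d)%N.
Hypothesis hr : (0 < r)%N.

Notation b k := (setnorm_pow N A k).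
Definition u k := Rroot k (b k).

Lemma u_bound k : u k <= Rmax 1 (b 1).
Proof.
rewrite /u; case: (Rle_dec (b k) 0) => hb.
  rewrite Rroot_nonpos //; have := Rmax_l 1 (b 1); lra.
have hbk : 0 < b k by lra.
rewrite Rroot_pos //.
case: k hb hbk => [|k] hb hbk.
  rewrite (b0 A hN hd hr) /Rpower ln_1 Rmult_0_r exp_0; exact: Rmax_l.
have hb1 : 0 < b 1.
  have := b_pow A hN hd hr k.+1 => h.
  have h1 := b_nonneg A hN hd hr 1; case: h1 => // h1.
  rewrite -h1 pow_i in h; [lra| lia].
apply: Rle_trans (Rmax_r 1 _).
have hinv : 0 <= / INR k.+1 by apply: Rlt_le; apply: Rinv_0_lt_compat; exact: INR_posn.
apply: Rle_trans (Rle_Rpower_l _ _ _ hinv (conj hbk (b_pow A hN hd hr k.+1))) _.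
rewrite -Rpower_pow // Rpower_mult Rinv_r ?Rpower_1 //; [lra| exact: INR_nzn].
Qed.
Lemma u_nonneg k : 0 <= u k. Proof. exact: Rroot_nonneg. Qed.

Definition sk m := sup (fun s => exists k, (m <= k)%N /\ s = u k).
Lemma sk_lub m : is_lub (fun s => exists k, (m <= k)%N /\ s = u k) (sk m).
Proof.
apply: sup_lub; first by exists (u m), m.
exists (Rmax 1 (b 1)) => s [k [_ ->]]; exact: u_bound.
Qed.
Lemma rhoE : jsr N A = inf (fun t => exists m, t = sk m).
Proof. by []. Qed.

Lemma rho_le beta : (exists m, forall k, (m <= k)%N -> u k <= beta) -> jsr N A <= beta.
Proof.
move=> [m hm]; rewrite rhoE.
apply: Rle_trans (inf_lb _ (ex_intro _ m erefl)) _.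
  exists 0 => t [m' ->]; have [h _] := sk_lub m'; apply: Rle_trans (h (u m') _).
    exact: u_nonneg.
  by exists m'.
have [_ h] := sk_lub m; apply: h => s [k [hk ->]]; exact: hm.
Qed.
Lemma rho_ge beta : (forall m, exists k, (m <= k)%N /\ beta <= u k) -> beta <= jsr N A.
Proof.
move=> h; rewrite rhoE; apply: inf_glb; first by exists (sk 0), 0%N.
move=> t [m ->]; have [k [hk hb]] := h m; apply: Rle_trans hb _.
have [h1 _] := sk_lub m; apply: h1; by exists k.
Qed.
Lemma rho_nonneg : 0 <= jsr N A.
Proof. apply: rho_ge => m; exists m; split => //; exact: u_nonneg. Qed.

Lemma rho_chain (c : R) (n q : nat) : 0 < c -> (0 < n)%N ->
  (forall j, exists L, (j * n <= L)%N /\ (L <= j * (n + q))%N /\ c ^ j <= b L) ->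
  c <= Rmax (jsr N A ^ n) (jsr N A ^ (n + q)).
Proof.
move=> hc hn hch.
have key : forall m, exists L, (m <= L)%N /\ (0 < L)%N /\ exists j, (0 < j)%N /\
    (j * n <= L)%N /\ (L <= j * (n + q))%N /\ Rpower c (INR j / INR L) <= u L.
  move=> m; have [L [h1 [h2 h3]]] := hch m.+1.
  have hL : (0 < L)%N by apply: leq_trans h1; rewrite muln_gt0.
  exists L; split.
    apply: leq_trans h1; apply: leq_trans (leqnSn m) _; rewrite leq_pmulr //.
  split => //; exists m.+1; split => //; split => //; split => //.
  have hcj : 0 < c ^ m.+1 by apply: pow_lt.
  rewrite /u Rroot_pos; last lra.
  have hinv : 0 <= / INR L by apply: Rlt_le; apply: Rinv_0_lt_compat; exact: INR_posn.
  apply: Rle_trans (Rle_Rpower_l _ _ _ hinv (conj hcj h3)).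
  rewrite -Rpower_pow // Rpower_mult /Rdiv; lra.
have hnq : (0 < n + q)%N by rewrite addn_gt0 hn.
case: (Rle_lt_dec 1 c) => hc1.
  apply: Rle_trans (Rmax_r _ _); apply: root_pow_le => //.
  apply: rho_ge => m; have [L [hm [hL0 [j [hj [h1 [h2 h3]]]]]]] := key m.
  exists L; split => //; apply: Rle_trans h3; apply: Rle_Rpower => //.
  have hL : 0 < INR L by exact: INR_posn.
  have hj' : 0 < INR j by exact: INR_posn.
  have : INR L <= INR j * INR (n + q) by rewrite -mult_INR; apply: le_INR; apply/leP.
  move=> h4; rewrite /Rdiv; apply: (Rmult_le_reg_l (INR (n + q) * INR L)).
    apply: Rmult_lt_0_compat => //; exact: INR_posn.
  have hnq' : INR (n + q) <> 0 by exact: INR_nzn.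
  field_simplify; lra.
apply: Rle_trans (Rmax_l _ _); apply: root_pow_le => //.
apply: rho_ge => m; have [L [hm [hL0 [j [hj [h1 [h2 h3]]]]]]] := key m.
exists L; split => //; apply: Rle_trans h3; apply: Rpower_dec; first lra.
have hL : 0 < INR L by exact: INR_posn.
have : INR j * INR n <= INR L by rewrite -mult_INR; apply: le_INR; apply/leP.
move=> h4; rewrite /Rdiv; apply: (Rmult_le_reg_l (INR n * INR L)).
  apply: Rmult_lt_0_compat => //; exact: INR_posn.
have hn' : INR n <> 0 by exact: INR_nzn.
field_simplify; lra.
Qed.

Lemma b_mul_pow n q : b (q * n) <= b n ^ q.
Proof.
elim: q => [|q IH]; first by rewrite mul0n (b0 A hN hd hr) /=; lra.
rewrite mulSn /=; apply: Rle_trans (b_mul A hN hd hr n (q * n)) _.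
apply: Rmult_le_compat_l => //; exact: (b_nonneg A hN hd hr n).
Qed.
Lemma b_split k n : b k <= b n ^ (k %/ n) * b 1 ^ (k %% n).
Proof.
rewrite {1}(divn_eq k n); apply: Rle_trans (b_mul A hN hd hr _ _) _.
apply: Rmult_le_compat; [exact: (b_nonneg A hN hd hr _)| exact: (b_nonneg A hN hd hr _)| exact: b_mul_pow| exact: (b_pow A hN hd hr)].
Qed.

Lemma rho_le_u n : (0 < n)%N -> jsr N A <= u n.
Proof.
move=> hn.
case: (Rle_dec (b n) 0) => hbn.
  have hun : u n = 0 by rewrite /u Rroot_nonpos.
  apply: rho_le; exists n => k hk; rewrite hun /u Rroot_nonpos; first lra.
  rewrite -(subnKC hk); apply: Rle_trans (b_mul A hN hd hr _ _) _.
  have := b_nonneg A hN hd hr (k - n); nra.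
have hbn' : 0 < b n by lra.
have hun : u n = Rpower (b n) (/ INR n) by rewrite /u Rroot_pos.
have hunp : 0 < u n by rewrite hun; exact: Rpower_pos.
suff hd' : forall dl, 0 < dl -> jsr N A <= u n * (1 + dl).
  apply: Rnot_lt_le => hlt.
  have := hd' ((jsr N A - u n) / (2 * u n)) ltac:(apply: Rdiv_lt_0_compat; lra).
  have -> : u n * (1 + (jsr N A - u n) / (2 * u n)) = u n + (jsr N A - u n) / 2 by field; lra.
  lra.
move=> dl hdl.
have hb1 : 0 < b 1.
  have h := b_pow A hN hd hr n; have h1 := b_nonneg A hN hd hr 1; case: h1 => // h1.
  rewrite -h1 pow_i in h; [lra| by apply/ltP].
pose lam := / INR n * ln (b n).
pose C := Rabs (ln (b 1) - lam).
pose eps := ln (1 + dl).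
have heps : 0 < eps by rewrite /eps -ln_1; apply: ln_increasing; lra.
have hC : 0 <= C by exact: Rabs_pos.
have hnR := INR_posn hn.
have [M [hM hM0]] := archimed_cor1 (eps / (INR n * C + 1)) ltac:(apply: Rdiv_lt_0_compat => //; nra).
apply: rho_le; exists (maxn M n) => k hk.
have hkM : (M <= k)%N by apply: leq_trans hk; exact: leq_maxl.
have hkn : (n <= k)%N by apply: leq_trans hk; exact: leq_maxr.
have hk0 : (0 < k)%N by apply: leq_trans hkn.
have hkR := INR_posn hk0.
have hMR : 0 < INR M by apply: INR_posn; apply/ltP.
have hMk : INR M <= INR k by apply: le_INR; apply/leP.
case: (Rle_dec (b k) 0) => hbk.
  have -> : u k = 0 by rewrite /u Rroot_nonpos.
  nra.
have hbk' : 0 < b k by lra.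
rewrite /u Rroot_pos // /Rpower.
set q := (k %/ n)%N; set s := (k %% n)%N.
have hks : INR k = INR q * INR n + INR s by rewrite /q /s {1}(divn_eq k n) plus_INR mult_INR.
have hsn : INR s <= INR n by apply: le_INR; apply/leP; apply: ltnW; rewrite /s ltn_mod.
have hs0 : 0 <= INR s by exact: pos_INR.
have hln : ln (b k) <= INR q * ln (b n) + INR s * ln (b 1).
  apply: Rle_trans (ln_mono hbk' (b_split k n)) _.
  have hp1 : 0 < b n ^ q by apply: pow_lt.
  have hp2 : 0 < b 1 ^ s by apply: pow_lt.
  rewrite ln_mult // !ln_pow // -/q -/s; lra.
have hlam : ln (b n) = INR n * lam by rewrite /lam; field; lra.
have h1 : INR s * (ln (b 1) - lam) <= INR n * C.
  have := Rle_abs (ln (b 1) - lam); rewrite -/C => hh.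
  apply: Rle_trans (Rmult_le_compat_l _ _ _ hs0 hh) _.
  apply: Rmult_le_compat_r => //.
have h2 : / INR k * ln (b k) <= lam + INR n * C / INR k.
  apply: (Rmult_le_reg_l (INR k)) => //.
  have -> : INR k * (/ INR k * ln (b k)) = ln (b k) by field; lra.
  have -> : INR k * (lam + INR n * C / INR k) = INR k * lam + INR n * C by field; lra.
  rewrite hlam in hln; rewrite hks; nra.
have h3 : INR n * C / INR k < eps.
  have h4 : INR n * C / INR k <= INR n * C / INR M.
    rewrite /Rdiv; apply: Rmult_le_compat_l; first nra.
    apply: Rinv_le_contravar => //.
  apply: Rle_lt_trans h4 _.
  have h5 : INR n * C / INR M < (INR n * C + 1) / INR M.
    rewrite /Rdiv; apply: Rmult_lt_compat_r; [exact: Rinv_0_lt_compat| lra].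
  apply: Rlt_trans h5 _.
  have := Rmult_lt_compat_l (INR n * C + 1) _ _ ltac:(nra) hM.
  have -> : (INR n * C + 1) * (eps / (INR n * C + 1)) = eps by field; nra.
  rewrite /Rdiv Rmult_comm; lra.
apply: Rle_trans (exp_mono (Rlt_le _ _ (Rle_lt_trans _ _ _ h2 (Rplus_lt_compat_l lam _ _ h3)))) _.
rewrite exp_plus /eps exp_ln; last lra.
have e : Rroot n (b n) = u n by [].
rewrite e hun /Rpower /lam; lra.
Qed.
End Limsup.

Section Span.
Variable d : nat.
Definition span (S : vec d -> Prop) (y : vec d) :=
  exists l : list (R * vec d), List.Forall (fun ws => S ws.2) l /\ y = comb l.

Lemma comb_scale c (l : list (R * vec d)) :
  comb (List.map (fun ws => (c * ws.1, ws.2)) l) = vscale c (comb l).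
Proof.
apply: vext => k; rewrite /vscale !comb_coord.
elim: l => [|[w s] l IH] /=; first by rewrite !big_nil; ring.
rewrite !big_cons IH /=; ring.
Qed.

Lemma span_sub (S : vec d -> Prop) y : S y -> span S y.
Proof.
move=> h; exists ((1, y) :: nil); split; first by constructor.
apply: vext => k; rewrite /= /vadd /vscale /vzero; ring.
Qed.
Lemma span_zero S : span S vzero.
Proof. by exists nil. Qed.
Lemma span_add S x y : span S x -> span S y -> span S (vadd x y).
Proof.
move=> [l1 [h1 ->]] [l2 [h2 ->]]; exists (l1 ++ l2); split.
  by apply List.Forall_app; split.
by rewrite comb_cat.
Qed.
Lemma span_scale S c x : span S x -> span S (vscale c x).
Proof.
move=> [l [h ->]]; exists (List.map (fun ws => (c * ws.1, ws.2)) l); split.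
  apply List.Forall_map; apply: List.Forall_impl h => ws //.
by rewrite comb_scale.
Qed.
Lemma span_subspace S : is_subspace (span S).
Proof.
split; first exact: span_zero.
split; [exact: span_add| exact: span_scale].
Qed.
Lemma span_mono (S T : vec d -> Prop) y : (forall z, S z -> T z) -> span S y -> span T y.
Proof.
move=> h [l [hl ->]]; exists l; split => //; apply: List.Forall_impl hl => ws; exact: h.
Qed.
Lemma span_span (S : vec d -> Prop) y : span (span S) y -> span S y.
Proof.
move=> [l [hl ->]]; elim: l hl => [|[w s] l IH] hl /=; first exact: span_zero.
inversion hl; subst; apply: span_add; [exact: span_scale| exact: IH].
Qed.
Lemma span_mulmv (S T : vec d -> Prop) M y : (forall z, S z -> T (mulmv M z)) ->
  span S y -> span T (mulmv M y).
Proof.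
move=> h [l [hl ->]]; rewrite mulmv_comb; eexists; split; last by reflexivity.
apply List.Forall_map; apply: List.Forall_impl hl => ws /=; exact: h.
Qed.
End Span.

Lemma subspace_opp d (V : vec d -> Prop) y : is_subspace V -> V y -> V (vopp y).
Proof.
move=> [_ [_ hs]] hy; have -> : vopp y = vscale (-1) y by apply: vext => i; rewrite /vopp /vscale; ring.
exact: hs.
Qed.
Lemma subspace_big d (V : vec d -> Prop) (I : Type) (r : seq I) (P : pred I) (F : I -> vec d) :
  is_subspace V -> (forall i, P i -> V (F i)) -> V (\big[vadd/vzero]_(i <- r | P i) F i).
Proof. move=> [h0 [ha _]] h; apply: big_ind => //. Qed.

Section Krylov.
Variables d r : nat.
Variable A : 'I_r -> mat d.
Hypothesis hirr : irreducible A.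

Lemma Ap_mono k k' x y : (k <= k')%N -> Ap A k x y -> Ap A k' x y.
Proof. move=> hk [j [M [hj [hM ->]]]]; exists j, M; split => //; exact: leq_trans hk. Qed.
Lemma Ap_self k x : Ap A k x x.
Proof. exists 0%N, idm; split => //; split => //; by rewrite mulmv_id. Qed.
Lemma Ap_step k x y i : Ap A k x y -> Ap A k.+1 x (mulmv (A i) y).
Proof.
move=> [j [M [hj [hM ->]]]]; exists j.+1, (mulmm (A i) M); split => //; split.
  by exists i, M.
by rewrite mulmvA.
Qed.

Definition V x k := span (Ap A k x).

Lemma V_mono x k k' y : (k <= k')%N -> V x k y -> V x k' y.
Proof. move=> hk; apply: span_mono => z; exact: Ap_mono. Qed.

Lemma V_stable x k : x <> vzero -> (forall y, V x k.+1 y -> V x k y) -> forall y, V x k y.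
Proof.
move=> hx hst.
have := hirr (span_subspace (Ap A k x)).
case.
- move=> i y hy; apply: hst; apply: span_mulmv hy => z hz; exact: Ap_step.
- move=> h; exfalso; apply: hx; apply: h; apply: span_sub; exact: Ap_self.
- done.
Qed.

Lemma krylov x p : (0 < d)%N -> (d - 1 <= p)%N -> x <> vzero -> forall y, V x p y.
Proof.
move=> hd hp hx; apply: NNPP => hn; move/not_all_ex_not: hn => [y0 hy0].
pose W (i : nat) := if (i < d)%N then V x i else (fun _ : vec d => True).
have hWsub : forall i, is_subspace (W i).
  move=> i; rewrite /W; case: (i < d)%N; first exact: span_subspace.
  by split => //; split.
have hWmono : forall i j y, (i <= j)%N -> W i y -> W j y.
  move=> i j y hij; rewrite /W; case: ifP => hi; case: ifP => hj //.
    exact: V_mono.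
  by move=> _; have := leq_ltn_trans hij hj; rewrite hi.
have hVp : forall i y, (i < d)%N -> V x i y -> V x p y.
  move=> i y hi; apply: V_mono; apply: leq_trans hp; rewrite leq_subRL //; lia.
have hex : forall i, (0 < i)%N -> (i <= d)%N -> exists y, W i y /\ ~ W i.-1 y.
  move=> i hi0 hid; case: (ltngtP i d) hid => // hid _.
    apply: NNPP => hne.
    have hst : forall y, V x i y -> V x i.-1 y.
      move=> y hy; apply: NNPP => hy'; apply: hne; exists y.
      rewrite /W hid; have -> : (i.-1 < d)%N by apply: leq_ltn_trans _ hid; exact: leq_pred.
      by split.
    have hall := V_stable hx (k:=i.-1) ltac:(by rewrite prednK).
    apply: hy0; apply: (hVp i.-1) (hall y0); apply: leq_ltn_trans _ hid; exact: leq_pred.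
  exists y0; rewrite /W hid ltnn; split => //.
  have -> : (d.-1 < d)%N by rewrite prednK.
  move=> h; apply: hy0; apply: (hVp d.-1) h; by rewrite prednK.
pose yv (i : 'I_d.+1) : vec d :=
  if (i : nat) == 0%N then x
  else epsilon (inhabits vzero) (fun y => W i y /\ ~ W (i : nat).-1 y).
have hyv1 : forall i : 'I_d.+1, W i (yv i).
  move=> i; rewrite /yv; case: eqP => hi.
    rewrite hi /W hd; apply: span_sub; exact: Ap_self.
  have := epsilon_spec (inhabits vzero) (fun y => W i y /\ ~ W (i : nat).-1 y)
    (hex i ltac:(by rewrite lt0n; apply/eqP) ltac:(by rewrite -ltnS)).
  by case.
have hyv2 : forall i : 'I_d.+1, (i : nat) != 0%N -> ~ W (i : nat).-1 (yv i).
  move=> i /eqP hi; rewrite /yv; case: eqP => // _.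
  have := epsilon_spec (inhabits vzero) (fun y => W i y /\ ~ W (i : nat).-1 y)
    (hex i ltac:(by rewrite lt0n; apply/eqP) ltac:(by rewrite -ltnS)).
  by case.
have [c [[i1 hi1] hc]] := dep_vectors yv.
have hi1' : c i1 != 0 by apply/eqP.
case: (@arg_maxnP _ i1 (fun i => c i != 0) (fun i : 'I_d.+1 => (i : nat)) hi1') => i0 /eqP hci0 hmax.
have hsum : vzero = \big[vadd/vzero]_(i < d.+1) vscale (c i) (yv i).
  apply: vext => k; rewrite big_vec_coord; symmetry; exact: (hc k).
rewrite (bigD1 i0) //= in hsum.
set rest := \big[vadd/vzero]_(i < d.+1 | i != i0) vscale (c i) (yv i) in hsum.
have hrest : W (i0 : nat).-1 rest.
  apply: subspace_big => // i hi.
  case: (Req_dec (c i) 0) => hci.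
    have -> : vscale (c i) (yv i) = vzero by apply: vext => k; rewrite /vscale hci /vzero; ring.
    by case: (hWsub (i0 : nat).-1).
  have := hmax i ltac:(by apply/eqP) => /= hle.
  have hlt : (i < i0)%N by rewrite ltn_neqAle hle andbT; exact: hi.
  have [_ [_ hs]] := hWsub (i0 : nat).-1; apply: hs; apply: hWmono (hyv1 i).
  by rewrite -ltnS prednK //; apply: leq_ltn_trans hlt.
have hyi0 : W (i0 : nat).-1 (yv i0).
  have -> : yv i0 = vscale (- / c i0) rest.
    apply: vext => k; have := congr1 (fun v => v k) hsum.
    rewrite /vadd /vscale /vzero => hk; field_simplify; [|exact: hci0].
    have -> : rest k = - (c i0 * yv i0 k) by lra.
    field; exact: hci0.
  by have [_ [_ hs]] := hWsub (i0 : nat).-1; apply: hs.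
case: (eqVneq (i0 : nat) 0%N) => hi0.
- apply: hx.
  have hr0 : rest = vzero.
    apply: vext => k; rewrite /rest big_vec_coord big1 // => i hi.
    have : c i = 0.
      apply: NNPP => hci; have hle : (i <= i0)%N := hmax i ltac:(by apply/eqP); move: hle; rewrite hi0 leqn0 => /eqP hi'.
      by move: hi; rewrite (_ : i = i0) ?eqxx //; apply: val_inj; rewrite /= hi' hi0.
    move=> ->; rewrite /vscale; ring.
  rewrite hr0 in hsum.
  have e : yv i0 = x by rewrite /yv hi0.
  apply: vext => k; have := congr1 (fun v => v k) hsum.
  rewrite /vadd /vscale /vzero e => hk.
  have : c i0 * x k = 0 by lra.
  case/Rmult_integral => // h; exfalso; exact: hci0 h.
- exact: hyv2 hi0 hyi0.
Qed.
End Krylov.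

Lemma cv_const c : Un_cv (fun _ => c) c.
Proof. move=> e he; exists 0%nat => k _; rewrite /Rdist Rminus_diag Rabs_R0; lra. Qed.

Section Inner.
Variable d : nat.
Definition inner (u v : vec d) := \big[Rplus/0]_(i < d) (u i * v i).
Lemma inner_sym u v : inner u v = inner v u.
Proof. apply: eq_bigr => i _; ring. Qed.
Lemma inner_add u v w : inner u (vadd v w) = inner u v + inner u w.
Proof. rewrite /inner -big_Rplus; apply: eq_bigr => i _; rewrite /vadd; ring. Qed.
Lemma inner_scale u c v : inner u (vscale c v) = c * inner u v.
Proof. rewrite /inner big_Rmull; apply: eq_bigr => i _; rewrite /vscale; ring. Qed.
Lemma inner_zero u : inner u vzero = 0.
Proof. rewrite /inner big1 // => i _; rewrite /vzero; ring. Qed.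
Lemma inner_comb u (l : list (R * vec d)) :
  inner u (comb l) = \big[Rplus/0]_(ws <- l) (ws.1 * inner u ws.2).
Proof.
elim: l => [|[w s] l IH] /=; first by rewrite big_nil inner_zero.
by rewrite big_cons inner_add inner_scale IH.
Qed.
Lemma inner_abs u v : Rabs (inner u v) <= s1 u * s1 v.
Proof.
apply: Rle_trans (big_Rabs _ _ _) _; rewrite /s1 big_Rmulr; apply: big_Rle => i _.
rewrite Rabs_mult; apply: Rmult_le_compat_l; [exact: Rabs_pos| exact: s1_ge].
Qed.
Lemma inner_self_zero u : inner u u = 0 -> u = vzero.
Proof.
move=> h; apply: vext => i; rewrite /vzero.
have : u i * u i <= inner u u.
  rewrite /inner (bigD1 i) //=; set S := \big[_/_]_(_ | _) _.
  have : 0 <= S by apply: big_Rnonneg => j _; nra.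
  lra.
rewrite h => h1; nra.
Qed.

Definition Gv (vs : list (vec d)) : mat d := fun i k => \big[Rplus/0]_(v <- vs) (v i * v k).
Definition fv (vs : list (vec d)) (u : vec d) := \big[Rplus/0]_(v <- vs) (inner v u * inner v u).

Lemma Gv_comb vs u : mulmv (Gv vs) u = comb (List.map (fun v => (inner v u, v)) vs).
Proof.
elim: vs => [|v vs IH] /=.
  apply: vext => i; rewrite /mulmv /Gv /vzero big1 // => k _; rewrite big_nil; ring.
rewrite -IH; apply: vext => i; rewrite /mulmv /Gv /vadd /vscale /inner.
under eq_bigr => k _ do rewrite big_cons.
rewrite (big_Rmulr _ _ _ (v i)).
rewrite -big_Rplus; apply: eq_bigr => k _; ring.
Qed.
Lemma Gv_f vs u : inner u (mulmv (Gv vs) u) = fv vs u.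
Proof.
rewrite Gv_comb inner_comb big_map /fv; apply: eq_bigr => v _ /=; by rewrite inner_sym.
Qed.
Lemma fv_nonneg vs u : 0 <= fv vs u.
Proof. apply: big_Rnonneg => v _; nra. Qed.
Lemma fv_zero vs u v : fv vs u = 0 -> List.In v vs -> inner v u = 0.
Proof.
move=> h hv.
have := @big_In_le _ vs (fun v => inner v u * inner v u) v (fun y => ltac:(nra)) hv.
rewrite -/(fv vs u) h => h1; nra.
Qed.
End Inner.

Section Gram.
Variables d r : nat.
Variable A : 'I_r -> mat d.
Variable N : vec d -> R.
Hypothesis hN : is_norm N.
Hypothesis hd : (0 < d)%N.
Hypothesis hr : (0 < r)%N.
Hypothesis hirr : irreducible A.
Variable p : nat.
Hypothesis hp : (d - 1 <= p)%N.

Definition PL := List.flat_map (plist A) (List.seq 0 p.+1).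
Lemma PLP B : List.In B PL <-> exists k, (k <= p)%N /\ prods A k B.
Proof.
rewrite /PL List.in_flat_map; split.
  move=> [k [hk /plistP hB]]; exists k; split => //.
  move/List.in_seq: hk => [_ /= hk]; apply/leP; lia.
move=> [k [hk hB]]; exists k; split; last exact/plistP.
apply/List.in_seq; split; [lia| move/leP: hk => /= hk; lia].
Qed.

Definition vsx (x : vec d) := [seq mulmv B x | B <- PL].
Lemma In_map (T U : Type) (f : T -> U) (l : list T) y : List.In y l -> List.In (f y) (map f l).
Proof. elim: l => [//|a l IH] /= [->|h]; [by left| right; exact: IH]. Qed.
Definition fx (x u : vec d) := fv (vsx x) u.

Lemma fx_pos x u : x <> vzero -> u <> vzero -> 0 < fx x u.
Proof.
move=> hx hu; have := fv_nonneg (vsx x) u; case=> // h; exfalso; apply: hu.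
have h0 : forall B, List.In B PL -> inner (mulmv B x) u = 0.
  move=> B hB; apply: (fv_zero (esym h)); exact: (In_map (fun B => mulmv B x) hB).
have [l [hl hul]] := krylov hirr hd hp hx u.
apply: inner_self_zero.
rewrite {2}hul inner_comb.
elim: l hl {hul} => [|[w s] l IH] hl; first by rewrite big_nil.
inversion hl as [|a b hs hl']; subst.
rewrite big_cons IH // /=.
move: hs => /= [k [M [hk [hM ->]]]].
rewrite inner_sym h0; first ring.
apply/PLP; by exists k.
Qed.

Lemma fx_scale a b x u : fx (vscale a x) (vscale b u) = (a * b) * (a * b) * fx x u.
Proof.
rewrite /fx /fv /vsx !big_map big_Rmull; apply: eq_bigr => B _.
rewrite mulmv_scale inner_scale [inner (vscale a _) _]inner_sym inner_scale inner_sym; ring.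
Qed.

Lemma inner_cont (xs us : nat -> vec d) x u :
  (forall i, Un_cv (fun k => xs k i) (x i)) -> (forall i, Un_cv (fun k => us k i) (u i)) ->
  Un_cv (fun k => inner (xs k) (us k)) (inner x u).
Proof. move=> hx hu; apply: cv_big => i _; exact: CV_mult. Qed.
Lemma mulmv_cont (xs : nat -> vec d) x M :
  (forall i, Un_cv (fun k => xs k i) (x i)) -> forall i, Un_cv (fun k => mulmv M (xs k) i) (mulmv M x i).
Proof. move=> hx i; apply: cv_big => j _; apply: CV_mult => //; exact: cv_const. Qed.

Lemma fx_cont (xs us : nat -> vec d) x u :
  (forall i, Un_cv (fun k => xs k i) (x i)) -> (forall i, Un_cv (fun k => us k i) (u i)) ->
  Un_cv (fun k => fx (xs k) (us k)) (fx x u).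
Proof.
move=> hx hu; rewrite /fx /fv /vsx.
apply: (Un_cv_ext (fun k => \big[Rplus/0]_(B <- PL) (inner (mulmv B (xs k)) (us k) * inner (mulmv B (xs k)) (us k)))).
  by move=> k; rewrite big_map.
rewrite big_map; apply: cv_big => B _.
have h := inner_cont (mulmv_cont B hx) hu.
exact: CV_mult.
Qed.

Lemma fx_lb : exists g, 0 < g /\ forall x u, s1 x = 1 -> s1 u = 1 -> g <= fx x u.
Proof.
pose zx (z : 'I_d + 'I_d -> R) : vec d := fun i => z (inl i).
pose zu (z : 'I_d + 'I_d -> R) : vec d := fun i => z (inr i).
pose l := List.map inl (enum 'I_d) ++ List.map inr (enum 'I_d).
have hb : forall z, s1 (zx z) = 1 /\ s1 (zu z) = 1 -> forall i, Rabs (z i) <= 1.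
  move=> z [h1 h2] [i|i].
    by rewrite -h1; exact: (s1_ge (zx z) i).
  by rewrite -h2; exact: (s1_ge (zu z) i).
have hs1 : forall (zs : nat -> vec d) z, (forall k, s1 (zs k) = 1) ->
    (forall i, Un_cv (fun k => zs k i) (z i)) -> s1 z = 1.
  move=> zs z h1 h2.
  have h3 : Un_cv (fun k => s1 (zs k)) (s1 z) by apply: cv_big => i _; exact: cv_cvabs.
  apply: (UL_sequence _ _ _ h3); apply: (Un_cv_ext (fun _ => 1)) => //; exact: cv_const.
have hc : forall (zs : nat -> 'I_d + 'I_d -> R) z,
    (forall k, s1 (zx (zs k)) = 1 /\ s1 (zu (zs k)) = 1) ->
    (forall i, List.In i l -> Un_cv (fun k => zs k i) (z i)) ->
    (s1 (zx z) = 1 /\ s1 (zu z) = 1) /\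
    Un_cv (fun k => fx (zx (zs k)) (zu (zs k))) (fx (zx z) (zu z)).
  move=> zs z h1 h2.
  have hx : forall i, Un_cv (fun k => zx (zs k) i) (zx z i).
    move=> i; apply: h2; apply: List.in_or_app; left; apply: List.in_map; apply: inIn; exact: mem_enum.
  have hu : forall i, Un_cv (fun k => zu (zs k) i) (zu z i).
    move=> i; apply: h2; apply: List.in_or_app; right; apply: List.in_map; apply: inIn; exact: mem_enum.
  split; last exact: fx_cont.
  split; [apply: (hs1 _ _ (fun k => (h1 k).1) hx)| apply: (hs1 _ _ (fun k => (h1 k).2) hu)].
have hpos : forall z, s1 (zx z) = 1 /\ s1 (zu z) = 1 -> 0 < fx (zx z) (zu z).
  move=> z [h1 h2]; apply: fx_pos => h; [move: h1| move: h2]; rewrite h /s1 big1 //; try lra;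
    move=> i _; rewrite /vzero Rabs_R0 //.
have [g [hg hge]] := @compact_lb _ l (fun z => s1 (zx z) = 1 /\ s1 (zu z) = 1)
   (fun z => fx (zx z) (zu z)) hb hc hpos.
exists g; split => // x u h1 h2.
pose z (i : 'I_d + 'I_d) := match i with inl j => x j | inr j => u j end.
exact: (hge z (conj h1 h2)).
Qed.
End Gram.

Lemma Lmap_map (T U : Type) (f : T -> U) (l : list T) : List.map f l = map f l.
Proof. by elim: l => [|a l IH] //=; rewrite IH. Qed.
Lemma In_map_inv (T U : Type) (f : T -> U) (l : list T) y :
  List.In y (map f l) -> exists x, List.In x l /\ y = f x.
Proof.
elim: l => [//|a l IH] /= [<-|h]; first by exists a; split => //; left.
have [x [hx ->]] := IH h; exists x; split => //; by right.
Qed.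
Lemma big_size_le (T : Type) (l : list T) (f : T -> R) beta :
  (forall x, List.In x l -> f x <= beta) -> \big[Rplus/0]_(x <- l) f x <= INR (size l) * beta.
Proof.
elim: l => [|a l IH] h; first by rewrite big_nil /=; lra.
rewrite big_cons (_ : size (a :: l) = (size l).+1) // S_INR; have := h a (or_introl erefl); have := IH (fun x hx => h x (or_intror hx)).
lra.
Qed.

Section Unif.
Variables d r : nat.
Variable A : 'I_r -> mat d.
Variable N : vec d -> R.
Hypothesis hN : is_norm N.
Hypothesis hd : (0 < d)%N.
Hypothesis hr : (0 < r)%N.
Hypothesis hirr : irreducible A.
Variable p : nat.
Hypothesis hp : (d - 1 <= p)%N.

Notation G x := (Gv (vsx A p x)).

Lemma widen_unlift (j : 'I_d) : unlift ord_max (widen_ord (leqnSn d) j) = Some j.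
Proof.
have -> : widen_ord (leqnSn d) j = lift ord_max j by apply: val_inj; rewrite [RHS]lift_max.
exact: liftK.
Qed.

Lemma Gsurj x : x <> vzero -> forall y, exists u, mulmv (G x) u = y.
Proof.
move=> hx y.
pose w (i : 'I_d.+1) : vec d := fun k =>
  match unlift ord_max i with Some j => G x k j | None => y k end.
have [c [[i1 hi1] hc]] := dep_vectors w.
pose c' : vec d := fun j => c (widen_ord (leqnSn d) j).
have key : forall k, mulmv (G x) c' k + c ord_max * y k = 0.
  move=> k; rewrite -(hc k) big_ord_recr /= /w unlift_none; congr (_ + _).
  rewrite /mulmv; apply: eq_bigr => j _; rewrite widen_unlift /c'; ring.
case: (Req_dec (c ord_max) 0) => hcm.
  exfalso.
  have hz : mulmv (G x) c' = vzero.
    apply: vext => k; have := key k; rewrite hcm /vzero; lra.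
  have hf : fx A p x c' = 0 by rewrite /fx -Gv_f hz inner_zero.
  case: (classic (c' = vzero)) => hc'.
    case: (unliftP ord_max i1) hi1 => [j ->|->] //.
    move=> h; apply: h; have := congr1 (fun v => v j) hc'; rewrite /c' /vzero.
    by have -> : lift ord_max j = widen_ord (leqnSn d) j by apply: val_inj; rewrite [LHS]lift_max.
  have := fx_pos hd hirr hp hx hc'; lra.
exists (vscale (- / c ord_max) c'); rewrite mulmv_scale; apply: vext => k.
have := key k; rewrite /vscale => hk; field_simplify; last exact: hcm.
have -> : mulmv (G x) c' k = - (c ord_max * y k) by lra.
field; exact: hcm.
Qed.


Lemma fx_lb2 : exists g, 0 < g /\ forall x u, g * (s1 x * s1 u) * (s1 x * s1 u) <= fx A p x u.
Proof.
have [g [hg hge]] := fx_lb hd hirr hp.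
exists g; split => // x u.
case: (Req_dec (s1 x) 0) => hx.
  rewrite hx; have := fv_nonneg (vsx A p x) u; rewrite /fx; nra.
case: (Req_dec (s1 u) 0) => hu.
  rewrite hu; have := fv_nonneg (vsx A p x) u; rewrite /fx; nra.
have hx' : 0 < s1 x by have := s1_nonneg x; lra.
have hu' : 0 < s1 u by have := s1_nonneg u; lra.
have := hge (vscale (/ s1 x) x) (vscale (/ s1 u) u).
rewrite !s1_scale !Rabs_right; try (apply: Rle_ge; apply: Rlt_le; exact: Rinv_0_lt_compat).
rewrite fx_scale => h; have {}h := h ltac:(field; lra) ltac:(field; lra).
set q := s1 x * s1 u.
have hq : 0 < q by rewrite /q; nra.
have e : / s1 x * / s1 u = / q by rewrite /q; field; lra.
rewrite e in h.
have := Rmult_le_compat_l (q * q) _ _ ltac:(nra) h.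
have -> : q * q * (/ q * / q * fx A p x u) = fx A p x u by field; lra.
nra.
Qed.

Lemma unif : exists dl, 0 < dl /\ forall x, N x = 1 -> forall y, N y <= dl ->
  conv (fun z => Ap A p x z \/ Ap A p (vopp x) z) y.
Proof.
have [c0 [hc0 hc0N]] := norm_equiv hN.
pose Cu := Cup N.
have hCu : 0 <= Cu := Cup_ge0 hN.
have [g [hg hge]] := fx_lb2.
pose Bp := \big[Rplus/0]_(B <- PL A p) opnorm N B.
have hBp : forall B, List.In B (PL A p) -> opnorm N B <= Bp.
  move=> B hB; apply: big_In_le => // M; exact: (op_nonneg hN hd).
have hBp0 : 0 <= Bp by apply: big_Rnonneg => B _; exact: (op_nonneg hN hd).
pose m := INR (size (PL A p)).
have hm : 0 <= m := pos_INR _.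
pose K := m * (Bp / c0) * (Cu * Cu / g) / c0.
have hK : 0 <= K.
  rewrite /K; apply: Rmult_le_pos; last by apply: Rlt_le; apply: Rinv_0_lt_compat.
  apply: Rmult_le_pos; [apply: Rmult_le_pos => //| ].
    apply: Rmult_le_pos => //; apply: Rlt_le; exact: Rinv_0_lt_compat.
  apply: Rmult_le_pos; [nra| apply: Rlt_le; exact: Rinv_0_lt_compat].
exists (/ (K + 1)); split; first by apply: Rinv_0_lt_compat; lra.
move=> x hx y hy.
have hx0 : x <> vzero by move=> h; rewrite h (Nzero hN) in hx; lra.
have hsx : 1 <= Cu * s1 x by rewrite -hx; exact: N_le_s1.
have hsx0 := s1_nonneg x.
have [u hu] := Gsurj hx0 y.
have hfu : fx A p x u = inner u y by rewrite /fx -Gv_f hu.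
have hiu := inner_abs u y.
have hfx := hge x u.
have hsu0 := s1_nonneg u.
have hsy0 := s1_nonneg y.
have hsu : g * s1 u <= Cu * Cu * s1 y.
  have h1 : g * (s1 x * s1 u) * (s1 x * s1 u) <= s1 u * s1 y.
    have := Rle_abs (inner u y); lra.
  case: (Req_dec (s1 u) 0) => h0; first by rewrite h0; nra.
  have hsu' : 0 < s1 u by lra.
  have h2 : g * (s1 x * s1 x) * s1 u <= s1 y.
    apply: (Rmult_le_reg_l (s1 u)) => //; nra.
  have h3 : 1 <= (Cu * Cu) * (s1 x * s1 x) by nra.
  have h4 : g * s1 u * 1 <= g * s1 u * ((Cu * Cu) * (s1 x * s1 x)).
    apply: Rmult_le_compat_l => //; nra.
  have h5 : Cu * Cu * (g * (s1 x * s1 x) * s1 u) <= Cu * Cu * s1 y.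
    apply: Rmult_le_compat_l => //; nra.
  have e : g * s1 u * ((Cu * Cu) * (s1 x * s1 x)) = Cu * Cu * (g * (s1 x * s1 x) * s1 u) by ring.
  lra.
pose wB B := inner (mulmv B x) u.
have hw : forall B, List.In B (PL A p) -> Rabs (wB B) <= Bp / c0 * s1 u.
  move=> B hB; apply: Rle_trans (inner_abs _ _) _; apply: Rmult_le_compat_r => //.
  have h1 := hc0N (mulmv B x); have h2 := op_ge hN hd B x; rewrite hx Rmult_1_r in h2.
  have h3 := hBp B hB.
  apply: (Rmult_le_reg_l c0) => //; field_simplify; lra.
have hsumw : \big[Rplus/0]_(B <- PL A p) Rabs (wB B) <= K * N y.
  apply: Rle_trans (big_size_le hw) _; rewrite -/m.
  have hsy : s1 y <= N y / c0 by apply: (Rmult_le_reg_l c0) => //; field_simplify; have := hc0N y; lra.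
  have h1 : s1 u <= Cu * Cu / g * s1 y by apply: (Rmult_le_reg_l g) => //; field_simplify; lra.
  have hBc : 0 <= Bp / c0 by apply: Rmult_le_pos => //; apply: Rlt_le; exact: Rinv_0_lt_compat.
  have hCg : 0 <= Cu * Cu / g by apply: Rmult_le_pos; [nra| apply: Rlt_le; exact: Rinv_0_lt_compat].
  have h2 : s1 u <= Cu * Cu / g * (N y / c0) by apply: Rle_trans h1 _; apply: Rmult_le_compat_l.
  have h3 : m * (Bp / c0 * s1 u) <= m * (Bp / c0 * (Cu * Cu / g * (N y / c0))).
    apply: Rmult_le_compat_l => //; apply: Rmult_le_compat_l => //.
  apply: Rle_trans h3 _; rewrite /K; right; field; lra.
have hNy0 : 0 <= N y := Nge0 hN y.
have hKd : K * N y <= K * / (K + 1) by apply: Rmult_le_compat_l.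
have hK1 : K * / (K + 1) < 1 by apply: (Rmult_lt_reg_r (K + 1)); [lra| field_simplify; lra].
set S := \big[Rplus/0]_(B <- PL A p) Rabs (wB B) in hsumw.
have hS0 : 0 <= S by apply: big_Rnonneg => B _; exact: Rabs_pos.
pose sg B := if Rle_dec 0 (wB B) then mulmv B x else vopp (mulmv B x).
pose l1 := [seq (Rabs (wB B), sg B) | B <- PL A p].
pose t := 1 - S.
exists (l1 ++ (t / 2, x) :: (t / 2, vopp x) :: nil); split; [|split].
- apply List.Forall_app; split.
    apply List.Forall_forall => ws hws; have [B [hB e]] := In_map_inv hws; subst ws => /=; split; first exact: Rabs_pos.
    have [k [hk hBk]] := (PLP A p B).1 hB.
    rewrite /sg; case: Rle_dec => hh /=.
      left; exists k, B; by split.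
    right; exists k, B; split => //; split => //; by rewrite mulmv_opp.
  constructor; first by split => /=; [rewrite /t; lra| left; exact: Ap_self].
  constructor; first by split => /=; [rewrite /t; lra| right; exact: Ap_self].
  constructor.
- rewrite wsum_cat wsum_big big_map.
  have -> : \big[Rplus/0]_(j <- PL A p) (Rabs (wB j), sg j).1 = S by [].
  rewrite /= /t; field.
- have e2 : comb ((t / 2, x) :: (t / 2, vopp x) :: nil) = vzero.
    by apply: vext => k; rewrite /= /vadd /vscale /vopp /vzero; ring.
  rewrite comb_cat e2; apply: vext => k; rewrite /vadd /vzero Rplus_0_r comb_coord big_map.
  rewrite -hu Gv_comb Lmap_map comb_coord /vsx !big_map.
  apply: eq_bigr => B _ /=; rewrite /sg /wB; case: Rle_dec => h /=.
    rewrite Rabs_right; [ring| lra].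
  rewrite Rabs_left; [rewrite /vopp; ring| lra].
Qed.
End Unif.

Lemma lim_mul c s R : 0 < c -> 0 <= s -> (forall t, 0 < t < c -> t * s <= R) -> c * s <= R.
Proof.
move=> hc hs h; apply: Rnot_lt_le => hlt.
case: (Req_dec s 0) => hs0.
  have := h (c / 2) ltac:(lra); rewrite hs0 in hlt *; lra.
have hs' : 0 < s by lra.
pose e := Rmin (c / 2) ((c * s - R) / (2 * s)).
have he1 : e <= c / 2 := Rmin_l _ _.
have he2 : e <= (c * s - R) / (2 * s) := Rmin_r _ _.
have he0 : 0 < e.
  apply: Rmin_glb_lt; first lra; apply: Rdiv_lt_0_compat; lra.
have := h (c - e) ltac:(lra).
have : e * s <= (c * s - R) / 2.
  have := Rmult_le_compat_r s _ _ (Rlt_le _ _ hs') he2.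
  have -> : (c * s - R) / (2 * s) * s = (c * s - R) / 2 by field; lra.
  done.
nra.
Qed.

Section Main.
Variables d r : nat.
Variable A : 'I_r -> mat d.
Variable N : vec d -> R.
Hypothesis hN : is_norm N.
Hypothesis hd : (0 < d)%N.
Hypothesis hr : (0 < r)%N.
Hypothesis hirr : irreducible A.
Variable p : nat.
Hypothesis hp : (d - 1 <= p)%N.

Notation b k := (setnorm_pow N A k).
Definition Hs (x : vec d) := fun t => 0 <= t /\ forall y, N y <= t ->
   conv (fun z => Ap A p x z \/ Ap A p (vopp x) z) y.
Definition hx (x : vec d) := sup (Hs x).

Lemma chiE : chi N A p = inf (fun c => exists x, N x = 1 /\ c = hx x).
Proof. by []. Qed.

Lemma comb_bound (M : mat d) beta (l : list (R * vec d)) :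
  List.Forall (fun ws => 0 <= ws.1 /\ N (mulmv M ws.2) <= beta) l ->
  N (mulmv M (comb l)) <= beta * wsum l.
Proof.
elim: l => [|[w s] l IH] hl /=.
  rewrite mulmv_zero (Nzero hN); lra.
inversion hl as [|a b' [hw hs] hl']; subst => /=.
rewrite mulmv_add mulmv_scale; apply: Rle_trans (norm_triangle hN _ _) _.
move: hw hs => /= hw hs.
rewrite (norm_hom hN) Rabs_right; last lra.
have := IH hl'; have := Rmult_le_compat_l _ _ _ hw hs; lra.
Qed.

Definition Bd := \big[Rplus/0]_(k <- iota 0 p.+1) b k.
Lemma Bd_ge k : (k <= p)%N -> b k <= Bd.
Proof.
move=> hk; apply: big_In_le; first by move=> j; exact: (b_nonneg A hN hd hr).
apply: inIn; rewrite mem_iota /= add0n ltnS //.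
Qed.

Lemma Hs_bound x t : N x = 1 -> Hs x t -> t <= Bd.
Proof.
move=> hx1 [ht h].
have [x0 hx0] := unit_ex hN hd.
have hy : N (vscale t x0) <= t by rewrite (norm_hom hN) hx0 Rabs_right; lra.
have [l [hl [hw he]]] := h _ hy.
have : N (mulmv idm (comb l)) <= Bd * wsum l.
  apply: comb_bound; apply: List.Forall_impl hl => [[w s]] /= [hw0 hs]; split => //.
  rewrite mulmv_id.
  have hop : forall k M, (k <= p)%N -> prods A k M -> opnorm N M <= Bd.
    move=> k M hk hM; apply: Rle_trans (Bd_ge hk); exact: (b_ge hN hd hr hM).
  case: hs => [[k [M [hk [hM ->]]]]|[k [M [hk [hM ->]]]]].
    apply: Rle_trans (op_ge hN hd M x) _; rewrite hx1 Rmult_1_r; exact: (hop _ _ hk hM).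
  apply: Rle_trans (op_ge hN hd M _) _; rewrite (normopp hN) hx1 Rmult_1_r; exact: (hop _ _ hk hM).
rewrite mulmv_id -he hw (norm_hom hN) hx0 Rabs_right; lra.
Qed.

Lemma Hs_zero x : Hs x 0.
Proof.
split; first lra.
move=> y hy.
have hy0 : y = vzero by apply: (norm_def hN); have := Nge0 hN y; lra.
exists ((/2, x) :: (/2, vopp x) :: nil); split; [|split].
- constructor; first by split => /=; [lra| left; exact: Ap_self].
  constructor; first by split => /=; [lra| right; exact: Ap_self].
  constructor.
- rewrite /=; field.
- rewrite hy0; apply: vext => k; rewrite /= /vadd /vscale /vopp /vzero; field.
Qed.

Lemma hx_lub x : N x = 1 -> is_lub (Hs x) (hx x).
Proof.
move=> hx1; apply: sup_lub; first by exists 0; exact: Hs_zero.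
exists Bd => t; exact: Hs_bound hx1.
Qed.

Lemma chi_le x : N x = 1 -> chi N A p <= hx x.
Proof.
move=> hx1; rewrite chiE; apply: inf_lb; last by exists x.
exists 0 => c [x' [hx' ->]]; have [h _] := hx_lub hx'; apply: h; exact: Hs_zero.
Qed.

Lemma chi_pos : 0 < chi N A p.
Proof.
have [dl [hdl hu]] := unif hN hd hirr hp.
have hdl' := hdl; apply: Rlt_le_trans hdl' _; rewrite chiE; apply: inf_glb.
  have [x hx1] := unit_ex hN hd; by exists (hx x), x.
move=> c [x [hx1 ->]]; have [h _] := hx_lub hx1; apply: h; split; [lra| exact: hu].
Qed.

Variable n : nat.
Hypothesis hn : (0 < n)%N.

Lemma amplify t s x : 0 < t < chi N A p -> 0 < s < b n -> x <> vzero ->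
  exists k M B, (k <= p)%N /\ prods A n M /\ prods A k B /\
    t * s * N x < N (mulmv M (mulmv B x)).
Proof.
move=> [ht0 ht] [hs0 hs] hx0.
have hNx := Nnzpos hN hx0.
pose x' := vscale (/ N x) x.
have hx'1 : N x' = 1.
  rewrite /x' (norm_hom hN) Rabs_right; first by field; lra.
  apply: Rle_ge; apply: Rlt_le; exact: Rinv_0_lt_compat.
have ht' : t < hx x' by apply: Rlt_le_trans ht (chi_le hx'1).
have [t' [[ht'0 hconv] htt']] : exists t', Hs x' t' /\ t < t'.
  apply: sup_approx => //; first by exists 0; exact: Hs_zero.
  exists Bd => t0; exact: Hs_bound hx'1.
have [M [hM hsM]] := b_approx hN hd hr hs.
have [z [hz hsz]] := op_approx hN hd hsM.
have hy : N (vscale t z) <= t' by rewrite (norm_hom hN) hz Rabs_right; lra.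
have [l [hl [hw he]]] := hconv _ hy.
have hMy : t * s < N (mulmv M (vscale t z)).
  rewrite mulmv_scale (norm_hom hN) Rabs_right; last lra.
  apply: Rmult_lt_compat_l => //.
have [ws [hin hws]] : exists ws, List.In ws l /\ t * s < N (mulmv M ws.2).
  apply: NNPP => hne.
  have : N (mulmv M (comb l)) <= t * s * wsum l.
    apply: comb_bound; apply List.Forall_forall => ws hin.
    have := (List.Forall_forall _ _).1 hl ws hin; case => hw0 _; split => //.
    apply: Rnot_lt_le => hlt; apply: hne; by exists ws.
  rewrite -he hw; lra.
have := (List.Forall_forall _ _).1 hl ws hin; case => _.
have key : forall k B, (k <= p)%N -> prods A k B ->
    t * s < N (mulmv M (mulmv B x')) -> exists k M B, (k <= p)%N /\ prods A n M /\ prods A k B /\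
    t * s * N x < N (mulmv M (mulmv B x)).
  move=> k B hk hB h; exists k, M, B; split => //; split => //; split => //.
  have hinv : / N x >= 0 by apply: Rle_ge; apply: Rlt_le; exact: Rinv_0_lt_compat.
  move: h; rewrite /x' !mulmv_scale (norm_hom hN) (Rabs_right _ hinv) => h.
  have := Rmult_lt_compat_l (N x) _ _ hNx h.
  have -> : N x * (/ N x * N (mulmv M (mulmv B x))) = N (mulmv M (mulmv B x)) by field; lra.
  lra.
case=> [[k [B [hk [hB e]]]]|[k [B [hk [hB e]]]]]; rewrite e in hws.
  exact: key hk hB hws.
apply: key hk hB _; by rewrite mulmv_opp mulmv_opp (normopp hN) in hws.
Qed.

Lemma chain_eta t s : 0 < t < chi N A p -> 0 < s < b n ->
  t * s <= Rmax (jsr N A ^ n) (jsr N A ^ (n + p)).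
Proof.
move=> ht hs.
have [x0 hx0] := unit_ex hN hd.
have hc : 0 < t * s by nra.
have H : forall j, exists L P, (j * n <= L)%N /\ (L <= j * (n + p))%N /\ prods A L P /\
    (t * s) ^ j <= N (mulmv P x0).
  elim=> [|j [L [P [h1 [h2 [hP hcj]]]]]].
    exists 0%N, idm; split => //; split => //; split => //; rewrite mulmv_id hx0 /=; lra.
  have hv : mulmv P x0 <> vzero.
    move=> h; rewrite h (Nzero hN) in hcj; have := pow_lt _ j hc; lra.
  have [k [M [B [hk [hM [hB hamp]]]]]] := amplify ht hs hv.
  exists (n + (k + L))%N, (mulmm M (mulmm B P)); split; [|split; [|split]].
  - rewrite mulSn leq_add2l; apply: leq_trans h1 _; exact: leq_addl.
  - rewrite mulSn addnA; apply: leq_add => //; rewrite leq_add2l //.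
  - apply: prods_mul => //; exact: prods_mul.
  - rewrite !mulmvA /=; have := Rmult_le_compat_l _ _ _ (Rlt_le _ _ hc) hcj; lra.
apply: (rho_chain hN hd hr hc hn) => j.
have [L [P [h1 [h2 [hP hcj]]]]] := H j; exists L; split => //; split => //.
apply: Rle_trans hcj _; apply: Rle_trans (op_ge1 hN hd P hx0) _; exact: (b_ge hN hd hr hP).
Qed.

Lemma bk_le_D k : (k <= p)%N -> b k <= Rmax 1 (b 1 ^ p).
Proof.
move=> hk; apply: Rle_trans (b_pow A hN hd hr k) _.
have h1 := b_nonneg A hN hd hr 1.
case: (Rle_lt_dec (b 1) 1) => hb.
  apply: Rle_trans (Rmax_l _ _); rewrite -(pow1 k); apply: pow_incr; lra.
apply: Rle_trans (Rmax_r _ _); apply: Rle_pow; [lra| exact/leP].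
Qed.

Lemma chain_nu t s : 0 < t < chi N A p -> 0 < s < b n ->
  t * s / Rmax 1 (b 1 ^ p) <= jsr N A ^ n.
Proof.
move=> ht hs.
set D := Rmax 1 (b 1 ^ p).
have hD : 1 <= D := Rmax_l _ _.
have [x0 hx0] := unit_ex hN hd.
have hc : 0 < t * s / D by apply: Rdiv_lt_0_compat; nra.
have amp : forall x, x <> vzero -> exists Y, prods A n Y /\ t * s / D * N x < N (mulmv Y x).
  move=> x hx.
  have [k [M [B [hk [hM [hB hamp]]]]]] := amplify ht hs hx.
  have hMB := prods_mul hM hB; rewrite addnC in hMB.
  have [X [Y [hX [hY e]]]] := prods_split hMB.
  exists Y; split => //.
  have h1 : N (mulmv M (mulmv B x)) <= D * N (mulmv Y x).
    rewrite -mulmvA e mulmvA; apply: Rle_trans (op_ge hN hd X _) _.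
    apply: Rmult_le_compat_r; first exact: Nge0.
    apply: Rle_trans (b_ge hN hd hr hX) _; exact: bk_le_D.
  apply: (Rmult_lt_reg_l D); first lra.
  have -> : D * (t * s / D * N x) = t * s * N x by field; lra.
  lra.
have H : forall j, exists P, prods A (j * n) P /\ (t * s / D) ^ j <= N (mulmv P x0).
  elim=> [|j [P [hP hcj]]].
    exists idm; split => //; rewrite mulmv_id hx0 /=; lra.
  have hv : mulmv P x0 <> vzero.
    move=> h; rewrite h (Nzero hN) in hcj; have := pow_lt _ j hc; lra.
  have [Y [hY hamp]] := amp _ hv.
  exists (mulmm Y P); split; first by rewrite mulSn; exact: prods_mul.
  rewrite mulmvA /=; have := Rmult_le_compat_l _ _ _ (Rlt_le _ _ hc) hcj; lra.
have hh : t * s / D <= Rmax (jsr N A ^ n) (jsr N A ^ (n + 0)).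
  apply: (rho_chain hN hd hr hc hn) => j.
  have [P [hP hcj]] := H j; exists (j * n)%N; split => //; split; first by rewrite addn0.
  apply: Rle_trans hcj _; apply: Rle_trans (op_ge1 hN hd P hx0) _; exact: (b_ge hN hd hr hP).
rewrite addn0 Rmax_left in hh; lra.
Qed.
End Main.

Lemma Rmax_pow x n p : 0 <= x -> Rmax (x ^ n) (x ^ (n + p)) = x ^ n * Rmax 1 (x ^ p).
Proof.
move=> hx; rewrite pow_add; have h1 := pow_le x n hx; have h2 := pow_le x p hx.
rewrite /Rmax; case: Rle_dec => h3; case: Rle_dec => h4 //; try nra.
Qed.

Lemma root_bound a e rho n : (0 < n)%N -> 0 < a -> 0 < e -> 0 < rho -> a <= e * rho ^ n ->
  Rroot n a <= Rroot n e * rho.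
Proof.
move=> hn ha he hrho h.
rewrite !Rroot_pos //.
have hrn : 0 < rho ^ n by apply: pow_lt.
have hinv : 0 <= / INR n by apply: Rlt_le; apply: Rinv_0_lt_compat; exact: INR_posn.
apply: Rle_trans (Rle_Rpower_l _ _ _ hinv (conj ha h)) _.
rewrite -Rpower_mult_distr //.
rewrite -Rpower_pow // Rpower_mult Rinv_r ?Rpower_1 //; [lra| exact: INR_nzn].
Qed.

Unset Implicit Arguments.

Theorem theorem1 (d r : nat) (A : 'I_r -> mat d) (N : vec d -> R)
  (hd : (0 < d)%nat) (hr : (0 < r)%nat)
  (hN : is_norm N) (hirr : irreducible A) (n p : nat)
  (hn : (1 <= n)%nat) (hp : (d - 1 <= p)%nat) :
  let rho := jsr N A in
  let An := Rroot n (setnorm_pow N A n) in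
  let eta := Rmax 1 (rho ^ p) / chi N A p in
  let nu := Rmax 1 (setnorm N A ^ p) / chi N A p in
  (rho <= An /\ An <= Rroot n eta * rho) /\
  (/ Rroot n nu * An <= rho /\ rho <= An).
Proof.
move=> rho An eta nu.
have hchi := chi_pos hN hd hr hirr hp.
have hrho0 : 0 <= rho := rho_nonneg A hN hd hr.
have h1 : rho <= An := rho_le_u A hN hd hr hn.
pose a := setnorm_pow N A n.
have eA : An = Rroot n a by [].
have hA0 : 0 <= An := Rroot_nonneg n a.
pose D := Rmax 1 (setnorm_pow N A 1 ^ p).
have hD : 1 <= D := Rmax_l _ _.
have hnu : nu = D / chi N A p by rewrite /nu (b1E A N).
case: (Rle_dec a 0) => ha.
  have hAn : An = 0 by rewrite eA Rroot_nonpos.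
  split; split => //.
    rewrite hAn; apply: Rmult_le_pos => //; exact: Rroot_nonneg.
  rewrite hAn Rmult_0_r //.
have ha' : 0 < a by lra.
have B1 : chi N A p * a <= Rmax (rho ^ n) (rho ^ (n + p)).
  rewrite Rmult_comm; apply: lim_mul => //; first lra.
  move=> s hs; rewrite Rmult_comm; apply: lim_mul => //; first lra.
  move=> t ht; exact: (chain_eta hN hd hr hn ht hs).
have B2 : chi N A p * a <= D * rho ^ n.
  rewrite Rmult_comm; apply: lim_mul => //; first lra.
  move=> s hs; rewrite Rmult_comm; apply: lim_mul => //; first lra.
  move=> t ht; have := chain_nu hN hd hr hn ht hs; rewrite -/D => h.
  apply: (Rmult_le_reg_r (/ D)); first by apply: Rinv_0_lt_compat; lra.
  have -> : D * rho ^ n * / D = rho ^ n by field; lra.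
  exact: h.
have hca : 0 < chi N A p * a by nra.
have hrho : 0 < rho.
  case: hrho0 => // h0; exfalso; rewrite -h0 pow_i in B2; [nra| by apply/ltP].
have hnpos : (0 < n)%N := hn.
split; split => //.
- rewrite eA; apply: root_bound => //.
    rewrite /eta; apply: Rdiv_lt_0_compat => //; have := Rmax_l 1 (rho ^ p); lra.
  rewrite Rmax_pow // in B1.
  apply: (Rmult_le_reg_l (chi N A p)) => //.
  have -> : chi N A p * (eta * rho ^ n) = rho ^ n * Rmax 1 (rho ^ p) by rewrite /eta; field; lra.
  exact: B1.
- have hnu0 : 0 < nu by rewrite hnu; apply: Rdiv_lt_0_compat; lra.
  have hb : An <= Rroot n nu * rho.
    rewrite eA; apply: root_bound => //.
    apply: (Rmult_le_reg_l (chi N A p)) => //.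
    have -> : chi N A p * (nu * rho ^ n) = D * rho ^ n by rewrite hnu; field; lra.
    exact: B2.
  have hr0 : 0 < Rroot n nu by rewrite Rroot_pos //; exact: Rpower_pos.
  apply: (Rmult_le_reg_l (Rroot n nu)) => //.
  have -> : Rroot n nu * (/ Rroot n nu * An) = An by field; lra.
  exact: hb.
Qed.
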